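(* Let $f$, $g$, $\xi$, $F$ satisfy the standing assumptions below, and let $x$ be the unique continuous solution of $x'(t)=-f(x(t))+g(t)$, $t>0$, $x(0)=\xi$. Suppose there exist $\delta>0$ and a function $\phi$ increasing on $(0,\delta)$ with $\lim_{x\to0^+}f(x)/\phi(x)=1$, and suppose there is $L\in(0,\infty)$ with \[ \lim_{t\to\infty}\frac{g(t)}{f(F^{-1}(t))}=L. \] Then $x(t)\to0$ as $t\to\infty$. Moreover: (i) if $f\in\mathrm{RV}_0(\beta)$ for some $\beta>1$, then $\lim_{t\to\infty}F(x(t))/t=\Lambda_*$, where $\Lambda_*\in(0,1)$ is the unique solution of $(1-\Lambda_* )\Lambda_*^{-\beta/(\beta-1)}=L$; (ii) if $f\circ F^{-1}\in\mathrm{RV}_\infty(-1)$ and $F^{-1}\in\mathrm{RV}_\infty(0)$, then $\lim_{t\to\infty}F(x(t))/t=\Lambda_*=1/(L+1)\in(0,1)$.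
   Context: Standing assumptions: $f\in C(\mathbb{R};\mathbb{R})$ is locally Lipschitz continuous on $\mathbb{R}$, $f(0)=0$ and $xf(x)>0$ for $x\neq0$; $g\in C([0,\infty);\mathbb{R})$ with $g(t)>0$ for $t>0$; $\xi>0$. $F(x)=\int_x^1 \frac{du}{f(u)}$ for $x>0$, with $\lim_{x\to0^+}F(x)=+\infty$; $F^{-1}$ is the inverse of the strictly decreasing function $F$. A measurable $\varphi:(0,\infty)\to(0,\infty)$ is in $\mathrm{RV}_0(\beta)$ if $\lim_{x\to0^+}\varphi(\lambda x)/\varphi(x)=\lambda^\beta$ for all $\lambda>0$ (applied to $f$ restricted to $(0,\infty)$, where $f>0$). A measurable positive $h$ is in $\mathrm{RV}_\infty(\alpha)$ if $\lim_{t\to\infty}h(\lambda t)/h(t)=\lambda^\alpha$ for all $\lambda>0$. *)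

(* Defs.v *)
From Stdlib Require Export Reals.
Open Scope R_scope.

Definition locally_lipschitz (f : R -> R) : Prop :=
  forall a b : R, exists K : R, forall u v : R,
    a <= u <= b -> a <= v <= b -> Rabs (f u - f v) <= K * Rabs (u - v).

Definition continuous_on_nonneg (h : R -> R) : Prop :=
  forall t, 0 <= t -> forall eps, 0 < eps -> exists d, 0 < d /\
    forall s, 0 <= s -> Rabs (s - t) < d -> Rabs (h s - h t) < eps.

Definition lim_infty (h : R -> R) (l : R) : Prop :=
  forall eps, 0 < eps -> exists T, forall t, T < t -> Rabs (h t - l) < eps.

Definition lim_0plus (h : R -> R) (l : R) : Prop :=
  forall eps, 0 < eps -> exists d, 0 < d /\
    forall x, 0 < x < d -> Rabs (h x - l) < eps.

Definition lim_0plus_infty (h : R -> R) : Prop :=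
  forall M, exists d, 0 < d /\ forall x, 0 < x < d -> M < h x.

(* regular variation at 0 (for a function positive on (0,oo)) *)
Definition RV0 (phi : R -> R) (beta : R) : Prop :=
  forall lam, 0 < lam -> lim_0plus (fun x => phi (lam * x) / phi x) (Rpower lam beta).

Definition RVinf (h : R -> R) (alpha : R) : Prop :=
  forall lam, 0 < lam -> lim_infty (fun t => h (lam * t) / h t) (Rpower lam alpha).

(* Main.v *)
Require Import Defs.
From Stdlib Require Import Reals Lra Lia Classical Ranalysis5.
Open Scope R_scope.

Lemma cont_eps f x : continuity_pt f x -> forall eps, 0 < eps ->
  exists d, 0 < d /\ forall y, Rabs (y - x) < d -> Rabs (f y - f x) < eps.
Proof.
  intros H eps He. destruct (H eps He) as [a [Ha Hy]]. exists a; split; auto.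
  intros y Hyx. destruct (Req_dec y x) as [->|Hne].
  - rewrite Rminus_diag, Rabs_R0; auto.
  - apply (Hy y). split. split; auto. exact I. auto.
Qed.

Lemma deriv_cont f x l : derivable_pt_lim f x l -> continuity_pt f x.
Proof. intro H. apply derivable_continuous_pt. exists l. exact H. Qed.

Lemma deriv_local (f g : R -> R) x l d : 0 < d ->
  (forall y, Rabs (y - x) < d -> f y = g y) ->
  derivable_pt_lim g x l -> derivable_pt_lim f x l.
Proof.
  intros Hd Heq Hg eps He. destruct (Hg eps He) as [del Hdel].
  assert (Hm : 0 < Rmin del d) by (apply Rmin_pos; [apply cond_pos|auto]).
  exists (mkposreal _ Hm). intros h Hh0 Hh. simpl in Hh.
  rewrite (Heq x), (Heq (x+h)).
  - apply Hdel; auto. apply Rlt_le_trans with (1 := Hh). apply Rmin_l.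
  - replace (x + h - x) with h by ring. apply Rlt_le_trans with (1 := Hh). apply Rmin_r.
  - rewrite Rminus_diag, Rabs_R0; auto.
Qed.

Lemma barrier (u d : R -> R) a b c : a <= b ->
  (forall t, a <= t <= b -> derivable_pt_lim u t (d t)) ->
  u a <= c -> (forall t, a < t < b -> c < u t -> d t <= 0) -> u b <= c.
Proof.
  intros Hab Hd Ha Hneg.
  destruct (Rle_lt_dec (u b) c) as [|Hb]; auto. exfalso.
  set (E := fun s => a <= s <= b /\ u s <= c).
  assert (HE1 : bound E) by (exists b; intros s [[_ H] _]; auto).
  assert (HE2 : exists s, E s) by (exists a; split; [lra|auto]).
  destruct (completeness E HE1 HE2) as [s [Hs1 Hs2]].
  assert (Has : a <= s) by (apply Hs1; split; [lra|auto]).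
  assert (Hsb : s <= b) by (apply Hs2; intros z [[_ H] _]; auto).
  assert (Hus : u s <= c).
  { destruct (Rle_lt_dec (u s) c) as [|Hgt]; auto. exfalso.
    destruct (cont_eps u s (deriv_cont _ _ _ (Hd s (conj Has Hsb))) (u s - c)) as [del [Hdel Hc]]; [lra|].
    assert (s <= s - del/2); [|lra].
    apply Hs2. intros z [Hz Huz].
    destruct (Rle_lt_dec z (s - del/2)) as [|Hz2]; auto. exfalso.
    assert (z <= s) by (apply Hs1; split; auto).
    assert (Rabs (z - s) < del) by (rewrite Rabs_left1; lra).
    specialize (Hc z H0). apply Rabs_def2 in Hc. lra. }
  assert (Hsb' : s < b) by (destruct Hsb; auto; subst; lra).
  destruct (MVT_cor2 u d s b Hsb') as [xi [Hxi1 Hxi2]].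
  { intros t Ht. apply Hd; lra. }
  assert (Huxi : c < u xi).
  { destruct (Rle_lt_dec (u xi) c) as [Hle|]; auto. exfalso.
    assert (xi <= s) by (apply Hs1; split; [lra|auto]). lra. }
  assert (d xi <= 0) by (apply Hneg; auto; lra).
  assert (d xi * (b - s) <= 0).
  { rewrite <- (Rmult_0_l (b - s)). apply Rmult_le_compat_r; lra. }
  lra.
Qed.

Lemma barrier_low (u d : R -> R) a b c : a <= b ->
  (forall t, a <= t <= b -> derivable_pt_lim u t (d t)) ->
  c <= u a -> (forall t, a < t < b -> u t < c -> 0 <= d t) -> c <= u b.
Proof.
  intros Hab Hd Ha Hpos.
  assert (H := barrier (fun t => - u t) (fun t => - d t) a b (- c) Hab).
  cut (- u b <= - c); [lra|]. apply H.
  - intros t Ht. apply derivable_pt_lim_opp. auto.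
  - lra.
  - intros t Ht Hc. assert (0 <= d t) by (apply Hpos; auto; lra). lra.
Qed.

Lemma deriv_ext (f g : R -> R) x l :
  (forall y, f y = g y) -> derivable_pt_lim f x l -> derivable_pt_lim g x l.
Proof. intros H Hf. apply (deriv_local g f x l 1); auto; lra. Qed.

Lemma fpos_of (f : R -> R) : (forall u, u <> 0 -> u * f u > 0) ->
  forall u, 0 < u -> 0 < f u.
Proof.
  intros H u Hu. specialize (H u ltac:(lra)).
  destruct (Rlt_le_dec 0 (f u)) as [|Hle]; auto.
  assert (u * f u <= 0); [|lra].
  rewrite <- (Rmult_0_r u). apply Rmult_le_compat_l; lra.
Qed.

Lemma F_deriv (f F : R -> R) (Hfc : continuity f)
  (Hfp : forall u, 0 < u -> 0 < f u)
  (HF : forall u, 0 < u -> exists pr : Riemann_integrable (fun v => / f v) u 1,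
          F u = RiemannInt pr) :
  forall u, 0 < u -> derivable_pt_lim F u (- / f u).
Proof.
  intros u Hu.
  set (a := u/2). set (b := 2*u).
  assert (Hab : a <= b) by (unfold a, b; lra).
  assert (C0 : forall x, a <= x <= b -> continuity_pt (fun v => / f v) x).
  { intros x Hx. apply (continuity_pt_inv f x (Hfc x)).
    assert (0 < f x) by (apply Hfp; unfold a in Hx; lra). lra. }
  set (P := primitive Hab (FTC_P1 Hab C0)).
  assert (HP := RiemannInt_P28 Hab C0 (x := u) ltac:(unfold a,b; lra)).
  destruct (HF a ltac:(unfold a; lra)) as [pra Hpra].
  apply (deriv_local F (fun v => F a - P v) u (- / f u) (u/2)); [lra| |].
  - intros v Hv. apply Rabs_def2 in Hv.
    destruct (HF v ltac:(lra)) as [prv Hprv].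
    unfold P, primitive. destruct (Rle_dec a v) as [r|r]; [|unfold a in r; lra].
    destruct (Rle_dec v b) as [r0|r0]; [|unfold b in r0; lra].
    rewrite Hpra, Hprv.
    rewrite <- (RiemannInt_P26 (FTC_P1 Hab C0 r r0) prv pra). ring.
  - replace (- / f u) with (0 - / f u) by ring.
    apply (deriv_ext (fct_cte (F a) - P)%F); [intro; reflexivity|].
    apply derivable_pt_lim_minus; [apply derivable_pt_lim_const| exact HP].
Qed.

Lemma F_decr (f F : R -> R) (Hfp : forall u, 0 < u -> 0 < f u)
  (HFd : forall u, 0 < u -> derivable_pt_lim F u (- / f u)) :
  forall u v, 0 < u -> u < v -> F v < F u.
Proof.
  intros u v Hu Huv.
  destruct (MVT_cor2 F (fun w => - / f w) u v Huv) as [c [Hc1 Hc2]].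
  { intros c Hc. apply HFd. lra. }
  assert (0 < / f c) by (apply Rinv_0_lt_compat, Hfp; lra).
  assert (0 < / f c * (v - u)) by (apply Rmult_lt_0_compat; lra).
  lra.
Qed.

Lemma F_one (f F : R -> R)
  (HF : forall u, 0 < u -> exists pr : Riemann_integrable (fun v => / f v) u 1,
          F u = RiemannInt pr) : F 1 = 0.
Proof. destruct (HF 1 ltac:(lra)) as [pr ->]. apply RiemannInt_P9. Qed.


Lemma Finv_F (F Finv : R -> R)
  (HFinv : forall t, 0 <= t -> 0 < Finv t /\ F (Finv t) = t)
  (Fdecr : forall u v, 0 < u -> u < v -> F v < F u) :
  forall u, 0 < u -> 0 <= F u -> Finv (F u) = u.
Proof.
  intros u Hu HFu. destruct (HFinv _ HFu) as [H1 H2].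
  destruct (Rtotal_order (Finv (F u)) u) as [Hl|[He|Hg]]; auto.
  - specialize (Fdecr _ _ H1 Hl). lra.
  - specialize (Fdecr _ _ Hu Hg). lra.
Qed.

Lemma Finv_decr (F Finv : R -> R)
  (HFinv : forall t, 0 <= t -> 0 < Finv t /\ F (Finv t) = t)
  (Fdecr : forall u v, 0 < u -> u < v -> F v < F u) :
  forall s t, 0 <= s -> s < t -> Finv t < Finv s.
Proof.
  intros s t Hs Hst. destruct (HFinv s Hs) as [Hs1 Hs2]. destruct (HFinv t ltac:(lra)) as [Ht1 Ht2].
  destruct (Rtotal_order (Finv t) (Finv s)) as [|[He|Hg]]; auto.
  - rewrite He in Ht2. lra.
  - specialize (Fdecr _ _ Hs1 Hg). lra.
Qed.

Lemma Finv_lt (F Finv : R -> R)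
  (HFinv : forall t, 0 <= t -> 0 < Finv t /\ F (Finv t) = t)
  (Fdecr : forall u v, 0 < u -> u < v -> F v < F u) :
  forall e t, 0 < e -> 0 <= t -> F e < t -> Finv t < e.
Proof.
  intros e t He Ht Hlt. destruct (HFinv t Ht) as [H1 H2].
  destruct (Rlt_le_dec (Finv t) e) as [|Hle]; auto.
  destruct Hle as [Hl|Heq].
  - specialize (Fdecr _ _ He Hl). lra.
  - rewrite <- Heq in H2. lra.
Qed.

Lemma Finv_deriv (f F Finv : R -> R) (Hfc : continuity f)
  (Hfp : forall u, 0 < u -> 0 < f u)
  (HFd : forall u, 0 < u -> derivable_pt_lim F u (- / f u))
  (HFinv : forall t, 0 <= t -> 0 < Finv t /\ F (Finv t) = t) :
  forall t, 0 < t -> derivable_pt_lim Finv t (- f (Finv t)).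
Proof.
  assert (Fdecr := F_decr f F Hfp HFd).
  intros t Ht eps Heps.
  destruct (HFinv t ltac:(lra)) as [Hu HFu]. set (u := Finv t) in *.
  destruct (cont_eps f u (Hfc u) eps Heps) as [d1 [Hd1 Hc]].
  set (e := Rmin d1 u / 2).
  assert (He : 0 < e) by (unfold e; assert (0 < Rmin d1 u) by (apply Rmin_pos; lra); lra).
  assert (He1 : e < d1) by (unfold e; assert (Rmin d1 u <= d1) by apply Rmin_l; assert (0 < Rmin d1 u) by (apply Rmin_pos; lra); lra).
  assert (He2 : e < u) by (unfold e; assert (Rmin d1 u <= u) by apply Rmin_r; assert (0 < Rmin d1 u) by (apply Rmin_pos; lra); lra).
  assert (Hup : F (u + e) < t) by (rewrite <- HFu; apply Fdecr; lra).
  assert (Hlo : t < F (u - e)) by (rewrite <- HFu; apply Fdecr; lra).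
  set (d := Rmin (Rmin (t - F (u + e)) (F (u - e) - t)) t).
  assert (Hd : 0 < d) by (unfold d; repeat apply Rmin_pos; lra).
  exists (mkposreal d Hd). intros h Hh0 Hh. simpl in Hh.
  assert (Hd1' : d <= t - F (u+e)) by (unfold d; eapply Rle_trans; [apply Rmin_l|apply Rmin_l]).
  assert (Hd2' : d <= F (u-e) - t) by (unfold d; eapply Rle_trans; [apply Rmin_l|apply Rmin_r]).
  assert (Hd3' : d <= t) by (unfold d; apply Rmin_r).
  apply Rabs_def2 in Hh. destruct Hh as [Hh1 Hh2].
  destruct (HFinv (t + h) ltac:(lra)) as [Hv HFv]. set (v := Finv (t + h)) in *.
  assert (Hv1 : v < u + e).
  { destruct (Rlt_le_dec v (u+e)) as [|Hle]; auto. destruct Hle as [Hl|Heq].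
    - specialize (Fdecr (u+e) v ltac:(lra) Hl). lra.
    - rewrite <- Heq in HFv. lra. }
  assert (Hv2 : u - e < v).
  { destruct (Rlt_le_dec (u-e) v) as [|Hle]; auto. destruct Hle as [Hl|Heq].
    - specialize (Fdecr _ _ Hv Hl). lra.
    - rewrite Heq in HFv. lra. }
  assert (Hvu : v <> u) by (intro Heq; rewrite Heq in HFv; lra).
  assert (Hmvt : exists xi, F v - F u = - / f xi * (v - u) /\ Rabs (xi - u) < e).
  { destruct (Rtotal_order v u) as [Hl|[Heq|Hg]]; [|contradiction|].
    - destruct (MVT_cor2 F (fun w => - / f w) v u Hl) as [c [Hq1 Hq2]].
      { intros c Hcc. apply HFd. lra. }
      exists c. split; [replace (F v - F u) with (-(F u - F v)) by ring; rewrite Hq1; ring|]. apply Rabs_def1; lra.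
    - destruct (MVT_cor2 F (fun w => - / f w) u v Hg) as [c [Hq1 Hq2]].
      { intros c Hcc. apply HFd. lra. }
      exists c. split; [exact Hq1|]. apply Rabs_def1; lra. }
  destruct Hmvt as [xi [Hm1 Hm2]].
  assert (Hfxi : 0 < f xi) by (apply Hfp; apply Rabs_def2 in Hm2; lra).
  assert (Hq : (v - u) / h = - f xi).
  { replace h with (F v - F u) by lra. rewrite Hm1. field. split; lra. }
  rewrite Hq. specialize (Hc xi ltac:(lra)).
  replace (- f xi - - f u) with (- (f xi - f u)) by ring. rewrite Rabs_Ropp. exact Hc.
Qed.

Lemma x_pos (f g x : R -> R) (xi : R)
  (Hf0 : f 0 = 0) (Hfsign : forall u, u <> 0 -> u * f u > 0)
  (Hgpos : forall t, 0 < t -> g t > 0) (Hxi : 0 < xi)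
  (Hx0 : x 0 = xi) (Hxc : continuous_on_nonneg x)
  (Hxd : forall t, 0 < t -> derivable_pt_lim x t (- f (x t) + g t)) :
  forall t, 0 <= t -> 0 < x t.
Proof.
  destruct (Hxc 0 ltac:(lra) xi Hxi) as [d [Hd Hs]].
  assert (Hstart : forall t, 0 <= t <= d/2 -> 0 < x t).
  { intros t Ht. assert (Rabs (t - 0) < d) by (rewrite Rminus_0_r, Rabs_right; lra).
    specialize (Hs t ltac:(lra) H). rewrite Hx0 in Hs. apply Rabs_def2 in Hs. lra. }
  assert (Hnn : forall t, d/2 <= t -> 0 <= x t).
  { intros t Ht. apply (barrier_low x (fun s => - f (x s) + g s) (d/2) t 0 Ht).
    - intros s Hs'. apply Hxd. lra.
    - left. apply Hstart. lra.
    - intros s Hs' Hxs. specialize (Hfsign (x s) ltac:(lra)). specialize (Hgpos s ltac:(lra)).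
      assert (f (x s) < 0).
      { destruct (Rlt_le_dec (f (x s)) 0) as [|Hle]; auto.
        assert (x s * f (x s) <= 0); [|lra].
        rewrite <- (Rmult_0_l (f (x s))). apply Rmult_le_compat_r; lra. }
      lra. }
  intros t Ht. destruct (Rle_lt_dec t (d/2)) as [Hle|Hlt]; [apply Hstart; lra|].
  destruct (Hnn t ltac:(lra)) as [|Hz]; auto. exfalso.
  assert (Hdt := Hxd t ltac:(lra)). rewrite <- Hz, Hf0 in Hdt.
  specialize (Hgpos t ltac:(lra)).
  destruct (Hdt (g t) Hgpos) as [del Hdel].
  set (h := - Rmin del (t - d/2) / 2).
  assert (Hm : 0 < Rmin del (t - d/2)) by (apply Rmin_pos; [apply cond_pos|lra]).
  assert (Hm1 : Rmin del (t - d/2) <= del) by apply Rmin_l.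
  assert (Hm2 : Rmin del (t - d/2) <= t - d/2) by apply Rmin_r.
  assert (Hh : h < 0) by (unfold h; lra).
  specialize (Hdel h ltac:(lra) ltac:(rewrite Rabs_left; unfold h; lra)).
  rewrite <- Hz in Hdel. apply Rabs_def2 in Hdel.
  assert (Hx : 0 <= x (t + h)) by (apply Hnn; unfold h; lra).
  assert ((x (t + h) - 0) / h <= 0).
  { replace ((x (t + h) - 0) / h) with (x (t+h) * / h) by (unfold Rdiv; ring).
    destruct Hx as [Hx|Hx].
    - assert (/ h < 0) by (apply Rinv_lt_0_compat; lra). nra.
    - rewrite <- Hx. lra. }
  replace (- 0 + g t) with (g t) in Hdel by ring.
  lra.
Qed.

Lemma g_bound (f g Finv : R -> R) (L : R)
  (Hh : forall t, 0 <= t -> 0 < f (Finv t))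
  (HgL : lim_infty (fun t => g t / f (Finv t)) L) :
  exists T, 0 < T /\ forall t, T < t -> g t < (L + 1) * f (Finv t).
Proof.
  destruct (HgL 1 ltac:(lra)) as [T HT]. exists (Rmax T 1). split.
  - assert (1 <= Rmax T 1) by apply Rmax_r. lra.
  - intros t Ht. assert (T <= Rmax T 1) by apply Rmax_l. assert (1 <= Rmax T 1) by apply Rmax_r.
    specialize (HT t ltac:(lra)). apply Rabs_def2 in HT. specialize (Hh t ltac:(lra)).
    assert (g t / f (Finv t) < L + 1) by lra.
    apply (Rmult_lt_compat_r (f (Finv t))) in H1; auto.
    unfold Rdiv in H1. rewrite Rmult_assoc, Rinv_l in H1; lra.
Qed.

Lemma x_bounded (f g x Finv : R -> R) (L : R) (HL : 0 < L)
  (Hfp : forall u, 0 < u -> 0 < f u)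
  (Hxd : forall t, 0 < t -> derivable_pt_lim x t (- f (x t) + g t))
  (Hxp : forall t, 0 <= t -> 0 < x t)
  (HFp : forall t, 0 <= t -> 0 < Finv t)
  (HFid : forall t, 0 < t -> derivable_pt_lim Finv t (- f (Finv t)))
  (Hg : exists T, 0 < T /\ forall t, T < t -> g t < (L + 1) * f (Finv t)) :
  exists T M, 0 < T /\ forall t, T <= t -> x t <= M.
Proof.
  destruct Hg as [T1 [HT1 Hg]].
  set (T := T1 + 1).
  exists T, (x T + (L + 1) * Finv T). split; [unfold T; lra|].
  intros t Ht.
  assert (Hz := barrier (fun s => x s + (L + 1) * Finv s)
     (fun s => (- f (x s) + g s) + (L + 1) * (- f (Finv s))) T t (x T + (L + 1) * Finv T) Ht).
  assert (x t + (L + 1) * Finv t <= x T + (L + 1) * Finv T); [|].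
  { apply Hz.
    - intros s Hs. apply (deriv_ext (x + mult_real_fct (L+1) Finv)%F); [intro; reflexivity|].
      apply derivable_pt_lim_plus; [apply Hxd; unfold T in Hs; lra|].
      apply derivable_pt_lim_scal. apply HFid. unfold T in Hs; lra.
    - lra.
    - intros s Hs _. specialize (Hg s ltac:(unfold T in Hs; lra)).
      specialize (Hfp (x s) (Hxp s ltac:(unfold T in Hs; lra))). lra. }
  assert (0 < Finv t) by (apply HFp; unfold T in Ht; lra).
  nra.
Qed.

Lemma g_to_0 (f g F Finv : R -> R) (L : R) (HL : 0 < L) (Hfc : continuity f) (Hf0 : f 0 = 0)
  (HFinv : forall t, 0 <= t -> 0 < Finv t /\ F (Finv t) = t)
  (Fdecr : forall u v, 0 < u -> u < v -> F v < F u)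
  (Hg : exists T, 0 < T /\ forall t, T < t -> g t < (L + 1) * f (Finv t)) :
  forall eps, 0 < eps -> exists T, 0 < T /\ forall t, T < t -> g t < eps.
Proof.
  intros eps He. destruct Hg as [T1 [HT1 Hg]].
  destruct (cont_eps f 0 (Hfc 0) (eps / (L+1))) as [d [Hd Hc]].
  { apply Rdiv_lt_0_compat; lra. }
  exists (Rmax T1 (F (d/2))). split.
  - assert (T1 <= Rmax T1 (F (d/2))) by apply Rmax_l. lra.
  - intros t Ht. assert (T1 <= Rmax T1 (F (d/2))) by apply Rmax_l.
    assert (F (d/2) <= Rmax T1 (F (d/2))) by apply Rmax_r.
    assert (Hft := Finv_lt F Finv HFinv Fdecr (d/2) t ltac:(lra) ltac:(lra) ltac:(lra)).
    destruct (HFinv t ltac:(lra)) as [Hp _].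
    specialize (Hc (Finv t) ltac:(rewrite Rminus_0_r, Rabs_right; lra)).
    rewrite Hf0, Rminus_0_r in Hc. apply Rabs_def2 in Hc.
    specialize (Hg t ltac:(lra)).
    assert (Hq : (L + 1) * f (Finv t) < (L+1) * (eps / (L+1))) by (apply Rmult_lt_compat_l; lra).
    replace ((L+1) * (eps / (L+1))) with eps in Hq by (field; lra). lra.
Qed.

Lemma x_to_0 (f g x : R -> R) (Hfc : continuity f)
  (Hfp : forall u, 0 < u -> 0 < f u)
  (Hxd : forall t, 0 < t -> derivable_pt_lim x t (- f (x t) + g t))
  (Hxp : forall t, 0 <= t -> 0 < x t)
  (Hb : exists T M, 0 < T /\ forall t, T <= t -> x t <= M)
  (Hg0 : forall eps, 0 < eps -> exists T, 0 < T /\ forall t, T < t -> g t < eps) :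
  lim_infty x 0.
Proof.
  intros eps Heps. destruct Hb as [T0 [M [HT0 Hb]]].
  set (e := eps / 2).
  destruct (Rlt_le_dec M e) as [HMe|HeM].
  { exists T0. intros t Ht. specialize (Hb t ltac:(lra)). specialize (Hxp t ltac:(lra)).
    rewrite Rminus_0_r, Rabs_right; unfold e in *; lra. }
  destruct (continuity_ab_min f e M HeM) as [c [Hc1 Hc2]].
  { intros c _. apply Hfc. }
  set (m := f c).
  assert (Hm : 0 < m) by (apply Hfp; unfold e in *; lra).
  destruct (Hg0 (m/2) ltac:(lra)) as [T2 [HT2 Hg2]].
  set (a := Rmax T0 T2 + 1).
  assert (Ha0 : T0 < a) by (unfold a; assert (T0 <= Rmax T0 T2) by apply Rmax_l; lra).
  assert (Ha2 : T2 < a) by (unfold a; assert (T2 <= Rmax T0 T2) by apply Rmax_r; lra).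
  set (N := 2 * M / m + 1).
  assert (HN : 0 < N) by (unfold N; assert (0 <= 2 * M / m) by (apply Rmult_le_pos; [unfold e in HeM; lra| left; apply Rinv_0_lt_compat; lra]); lra).
  set (b := a + N).
  assert (Hex : exists s, a <= s <= b /\ x s <= e).
  { apply NNPP. intro Hne.
    assert (Hall : forall s, a <= s <= b -> e < x s).
    { intros s Hs. destruct (Rlt_le_dec e (x s)); auto. exfalso. apply Hne. exists s; auto. }
    destruct (MVT_cor2 x (fun s => - f (x s) + g s) a b ltac:(unfold b; lra)) as [xi [H1 H2]].
    { intros s Hs. apply Hxd. lra. }
    assert (Hxi1 := Hall xi ltac:(lra)). assert (Hxi2 := Hb xi ltac:(lra)).
    assert (m <= f (x xi)) by (apply Hc1; lra).
    assert (g xi < m / 2) by (apply Hg2; lra).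
    assert (Hb' := Hxp b ltac:(lra)). assert (Ha' := Hb a ltac:(lra)).
    assert (Hd : - f (x xi) + g xi < - (m/2)) by lra.
    assert ((- f (x xi) + g xi) * (b - a) < - (m / 2) * (b - a)).
    { apply Rmult_lt_compat_r; unfold b; lra. }
    assert (- (m/2) * (b - a) = - M - m / 2).
    { unfold b, N. field. lra. }
    lra. }
  destruct Hex as [s [Hs Hxs]].
  exists b. intros t Ht.
  assert (x t <= e).
  { apply (barrier x (fun s => - f (x s) + g s) s t e); [lra| | auto |].
    - intros r Hr. apply Hxd. lra.
    - intros r Hr Her.
      assert (m <= f (x r)) by (apply Hc1; split; [lra| apply Hb; lra]).
      assert (g r < m / 2) by (apply Hg2; lra). lra. }
  specialize (Hxp t ltac:(lra)).
  rewrite Rminus_0_r, Rabs_right; unfold e in *; lra.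
Qed.

Lemma ev_below (u du : R -> R) T c gam : 0 < gam ->
  (forall t, T <= t -> derivable_pt_lim u t (du t)) ->
  (forall t, T <= t -> c < u t -> du t <= - gam) ->
  exists T', forall t, T' <= t -> u t <= c.
Proof.
  intros Hg Hd Hneg.
  destruct (Rle_lt_dec (u T) c) as [HuT|HuT].
  - exists T. intros t Ht. apply (barrier u du T t c Ht); auto.
    + intros s Hs. apply Hd. lra.
    + intros s Hs Hc. specialize (Hneg s ltac:(lra) Hc). lra.
  - set (N := (u T - c) / gam + 1).
    assert (HN : 0 < N) by (unfold N; assert (0 < (u T - c) / gam) by (apply Rdiv_lt_0_compat; lra); lra).
    set (b := T + N).
    assert (Hex : exists s, T <= s <= b /\ u s <= c).
    { apply NNPP. intro Hne.
      assert (Hall : forall s, T <= s <= b -> c < u s).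
      { intros s Hs. destruct (Rlt_le_dec c (u s)); auto. exfalso. apply Hne. exists s; auto. }
      destruct (MVT_cor2 u du T b ltac:(unfold b; lra)) as [xi [H1 H2]].
      { intros s Hs. apply Hd. lra. }
      assert (Hx := Hneg xi ltac:(lra) (Hall xi ltac:(lra))).
      assert (Hb := Hall b ltac:(unfold b; lra)).
      assert (du xi * (b - T) <= - gam * (b - T)).
      { apply Rmult_le_compat_r; unfold b; lra. }
      assert (- gam * (b - T) = - (u T - c) - gam) by (unfold b, N; field; lra).
      lra. }
    destruct Hex as [s [Hs Hus]].
    exists s. intros t Ht. apply (barrier u du s t c Ht); auto.
    + intros r Hr. apply Hd. lra.
    + intros r Hr Hc. specialize (Hneg r ltac:(lra) Hc). lra.
Qed.

Lemma ev_above (u du : R -> R) T c gam : 0 < gam ->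
  (forall t, T <= t -> derivable_pt_lim u t (du t)) ->
  (forall t, T <= t -> u t < c -> gam <= du t) ->
  exists T', forall t, T' <= t -> c <= u t.
Proof.
  intros Hg Hd Hpos.
  destruct (ev_below (fun t => - u t) (fun t => - du t) T (- c) gam Hg) as [T' HT'].
  - intros t Ht. apply derivable_pt_lim_opp. auto.
  - intros t Ht Hc. specialize (Hpos t Ht ltac:(lra)). lra.
  - exists T'. intros t Ht. specialize (HT' t Ht). lra.
Qed.

Lemma lim_mult (a b : R -> R) la lb :
  lim_infty a la -> lim_infty b lb -> lim_infty (fun t => a t * b t) (la * lb).
Proof.
  intros Ha Hb eps He.
  set (e := Rmin 1 (eps / (Rabs la + Rabs lb + 1))).
  assert (Hpos : 0 < eps / (Rabs la + Rabs lb + 1)).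
  { apply Rdiv_lt_0_compat; auto. assert (0 <= Rabs la) by apply Rabs_pos. assert (0 <= Rabs lb) by apply Rabs_pos. lra. }
  assert (He0 : 0 < e) by (unfold e; apply Rmin_pos; lra).
  assert (He1 : e <= 1) by apply Rmin_l.
  assert (He2 : e <= eps / (Rabs la + Rabs lb + 1)) by apply Rmin_r.
  destruct (Ha e He0) as [T1 H1]. destruct (Hb e He0) as [T2 H2].
  exists (Rmax T1 T2). intros t Ht.
  assert (T1 <= Rmax T1 T2) by apply Rmax_l. assert (T2 <= Rmax T1 T2) by apply Rmax_r.
  specialize (H1 t ltac:(lra)). specialize (H2 t ltac:(lra)).
  replace (a t * b t - la * lb) with ((a t - la) * (b t - lb) + la * (b t - lb) + lb * (a t - la)) by ring.
  assert (Htr : forall X Y Z, Rabs (X + Y + Z) <= Rabs X + Rabs Y + Rabs Z).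
  { intros X Y Z. eapply Rle_trans; [apply Rabs_triang|]. apply Rplus_le_compat_r, Rabs_triang. }
  eapply Rle_lt_trans; [apply Htr|]. rewrite !Rabs_mult.
  assert (0 <= Rabs la) by apply Rabs_pos. assert (0 <= Rabs lb) by apply Rabs_pos.
  assert (0 <= Rabs (a t - la)) by apply Rabs_pos. assert (0 <= Rabs (b t - lb)) by apply Rabs_pos.
  assert (Rabs la * Rabs (b t - lb) <= Rabs la * e) by (apply Rmult_le_compat_l; lra).
  assert (Rabs lb * Rabs (a t - la) <= Rabs lb * e) by (apply Rmult_le_compat_l; lra).
  assert (e * (Rabs la + Rabs lb + 1) <= eps).
  { apply (Rmult_le_compat_r (Rabs la + Rabs lb + 1)) in He2; [|lra].
    unfold Rdiv in He2. rewrite Rmult_assoc, Rinv_l in He2; lra. }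
  assert (Rabs (a t - la) * Rabs (b t - lb) < e).
  { apply Rle_lt_trans with (e * Rabs (b t - lb)).
    - apply Rmult_le_compat_r; lra.
    - assert (e * Rabs (b t - lb) < e * 1) by (apply Rmult_lt_compat_l; lra). lra. }
  nra.
Qed.

Lemma lim_nonneg (a : R -> R) l : lim_infty a l ->
  (exists T, forall t, T < t -> 0 < a t) -> 0 <= l.
Proof.
  intros Ha [T HT]. destruct (Rle_lt_dec 0 l) as [|Hl]; auto.
  destruct (Ha (- l) ltac:(lra)) as [T1 H1].
  specialize (H1 (Rmax T T1 + 1) ltac:(assert (T1 <= Rmax T T1) by apply Rmax_r; lra)).
  specialize (HT (Rmax T T1 + 1) ltac:(assert (T <= Rmax T T1) by apply Rmax_l; lra)).
  apply Rabs_def2 in H1. lra.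
Qed.

Lemma alg_up A C D K gam eta : 0 < A -> 0 < C -> 0 < D -> 0 < eta -> 0 <= K -> 0 < gam ->
  eta * (4 * K + gam) = gam -> D <= (1 + eta) * C -> K - gam / 4 < A / C ->
  K - gam / 2 <= A / D.
Proof.
  intros HA HC HD He HK Hg Heta HDC Hr.
  assert (HA' : (K - gam/4) * C < A).
  { apply (Rmult_lt_compat_r C) in Hr; auto. unfold Rdiv in Hr. rewrite Rmult_assoc, Rinv_l in Hr; lra. }
  apply (Rmult_le_reg_r D); auto. unfold Rdiv. rewrite Rmult_assoc, Rinv_l, Rmult_1_r; [|lra].
  destruct (Rle_lt_dec (K - gam/2) 0) as [Hn|Hp].
  - assert ((K - gam/2) * D <= 0) by (rewrite <- (Rmult_0_l D); apply Rmult_le_compat_r; lra). lra.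
  - assert ((K - gam/2) * D <= (K - gam/2) * ((1 + eta) * C)) by (apply Rmult_le_compat_l; lra).
    assert ((K - gam/2) * (1 + eta) <= K - gam / 4) by nra.
    assert ((K - gam/2) * (1 + eta) * C <= (K - gam/4) * C) by (apply Rmult_le_compat_r; lra).
    nra.
Qed.

Lemma alg_low A C D K gam eta : 0 < A -> 0 < C -> 0 < D -> 0 < eta -> 0 <= K -> 0 < gam ->
  eta * (4 * K + gam) = gam -> C <= (1 + eta) * D -> A / C < K + gam / 4 ->
  A / D <= K + gam / 2.
Proof.
  intros HA HC HD He HK Hg Heta HDC Hr.
  assert (HA' : A < (K + gam/4) * C).
  { apply (Rmult_lt_compat_r C) in Hr; auto. unfold Rdiv in Hr. rewrite Rmult_assoc, Rinv_l in Hr; lra. }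
  apply (Rmult_le_reg_r D); auto. unfold Rdiv. rewrite Rmult_assoc, Rinv_l, Rmult_1_r; [|lra].
  assert ((K + gam/4) * C <= (K + gam/4) * ((1 + eta) * D)) by (apply Rmult_le_compat_l; lra).
  assert ((K + gam/4) * (1 + eta) = K + gam / 2) by nra.
  nra.
Qed.

Lemma core_up (g h y : R -> R) (L T0 L1 p : R) (HL : 0 < L) (HL1 : 0 < L1)
  (Hh : forall t, 0 <= t -> 0 < h t) (Hgp : forall t, 0 < t -> 0 < g t)
  (HAN : forall eta, 0 < eta -> exists T, 0 <= T /\
          forall s z, T <= s -> s <= z -> h z <= (1 + eta) * h s)
  (HG : lim_infty (fun t => g t / h t) L) (HT0 : 0 <= T0)
  (Hyd : forall t, T0 < t -> derivable_pt_lim y t (1 - g t / h (y t)))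
  (Hyp : forall t, T0 < t -> 0 <= y t)
  (Hp : lim_infty (fun t => h t / h (L1 * t)) p) (Hgap : 1 - L * p < L1) :
  exists T, forall t, T <= t -> y t <= L1 * t.
Proof.
  assert (Hp0 : 0 <= p).
  { apply (lim_nonneg _ _ Hp). exists 0. intros t Ht.
    apply Rdiv_lt_0_compat; apply Hh; [lra|]. left; apply Rmult_lt_0_compat; lra. }
  set (K := L * p).
  assert (HK : 0 <= K) by (unfold K; apply Rmult_le_pos; lra).
  set (gam := L1 - (1 - K)).
  assert (Hgam : 0 < gam) by (unfold gam, K; lra).
  set (eta := gam / (4 * K + gam)).
  assert (Heta : 0 < eta) by (unfold eta; apply Rdiv_lt_0_compat; lra).
  assert (Heta2 : eta * (4 * K + gam) = gam) by (unfold eta; field; lra).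
  destruct (HAN eta Heta) as [TA [HTA HA]].
  destruct (lim_mult _ _ _ _ HG Hp (gam/4) ltac:(lra)) as [Tq Hq].
  set (Ts := Rmax (Rmax T0 Tq) (TA / L1) + 1).
  assert (H1 : T0 < Ts /\ Tq < Ts /\ TA / L1 < Ts).
  { unfold Ts. assert (Rmax T0 Tq <= Rmax (Rmax T0 Tq) (TA / L1)) by apply Rmax_l.
    assert (TA / L1 <= Rmax (Rmax T0 Tq) (TA / L1)) by apply Rmax_r.
    assert (T0 <= Rmax T0 Tq) by apply Rmax_l. assert (Tq <= Rmax T0 Tq) by apply Rmax_r. lra. }
  destruct (ev_below (fun t => y t - L1 * t) (fun t => (1 - g t / h (y t)) - L1 * 1) Ts 0 (gam / 2))
    as [T' HT']; [lra| | |].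
  - intros t Ht. apply (deriv_ext (y - mult_real_fct L1 id)%F); [intro; reflexivity|].
    apply derivable_pt_lim_minus; [apply Hyd; lra|].
    apply derivable_pt_lim_scal, derivable_pt_lim_id.
  - intros t Ht Hpos.
    assert (Ht0 : 0 < t) by lra.
    assert (HL1t : TA <= L1 * t).
    { assert (TA / L1 < t) by lra. apply (Rmult_lt_compat_l L1) in H; auto.
      replace (L1 * (TA / L1)) with TA in H by (field; lra). lra. }
    assert (HDC := HA (L1 * t) (y t) HL1t ltac:(lra)).
    specialize (Hq t ltac:(lra)). apply Rabs_def2 in Hq.
    assert (Hprod : g t / h t * (h t / h (L1 * t)) = g t / h (L1 * t)).
    { field. split; apply Rgt_not_eq, Hh; [|lra]. left; apply Rmult_lt_0_compat; lra. }
    rewrite Hprod in Hq.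
    assert (Hb := alg_up (g t) (h (L1 * t)) (h (y t)) K gam eta (Hgp t Ht0)
      (Hh (L1 * t) ltac:(left; apply Rmult_lt_0_compat; lra)) (Hh (y t) ltac:(apply Hyp; lra)) Heta HK Hgam Heta2 HDC
      ltac:(unfold K in *; lra)).
    unfold gam in *. lra.
  - exists T'. intros t Ht. specialize (HT' t Ht). lra.
Qed.

Lemma core_low (g h y : R -> R) (L T0 L0 p : R) (HL : 0 < L) (HL0 : 0 < L0)
  (Hh : forall t, 0 <= t -> 0 < h t) (Hgp : forall t, 0 < t -> 0 < g t)
  (HAN : forall eta, 0 < eta -> exists T, 0 <= T /\
          forall s z, T <= s -> s <= z -> h z <= (1 + eta) * h s)
  (HG : lim_infty (fun t => g t / h t) L) (HT0 : 0 <= T0)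
  (Hyd : forall t, T0 < t -> derivable_pt_lim y t (1 - g t / h (y t)))
  (Hyinf : forall K, exists T, forall t, T < t -> K < y t)
  (Hp : lim_infty (fun t => h t / h (L0 * t)) p) (Hgap : L0 < 1 - L * p) :
  exists T, forall t, T <= t -> L0 * t <= y t.
Proof.
  assert (Hp0 : 0 <= p).
  { apply (lim_nonneg _ _ Hp). exists 0. intros t Ht.
    apply Rdiv_lt_0_compat; apply Hh; [lra|]. left; apply Rmult_lt_0_compat; lra. }
  set (K := L * p).
  assert (HK : 0 <= K) by (unfold K; apply Rmult_le_pos; lra).
  set (gam := 1 - K - L0).
  assert (Hgam : 0 < gam) by (unfold gam, K; lra).
  set (eta := gam / (4 * K + gam)).
  assert (Heta : 0 < eta) by (unfold eta; apply Rdiv_lt_0_compat; lra).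
  assert (Heta2 : eta * (4 * K + gam) = gam) by (unfold eta; field; lra).
  destruct (HAN eta Heta) as [TA [HTA HA]].
  destruct (lim_mult _ _ _ _ HG Hp (gam/4) ltac:(lra)) as [Tq Hq].
  destruct (Hyinf TA) as [Ty HTy].
  set (Ts := Rmax (Rmax T0 Tq) Ty + 1).
  assert (H1 : T0 < Ts /\ Tq < Ts /\ Ty < Ts).
  { unfold Ts. assert (Rmax T0 Tq <= Rmax (Rmax T0 Tq) Ty) by apply Rmax_l.
    assert (Ty <= Rmax (Rmax T0 Tq) Ty) by apply Rmax_r.
    assert (T0 <= Rmax T0 Tq) by apply Rmax_l. assert (Tq <= Rmax T0 Tq) by apply Rmax_r. lra. }
  destruct (ev_above (fun t => y t - L0 * t) (fun t => (1 - g t / h (y t)) - L0 * 1) Ts 0 (gam / 2))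
    as [T' HT']; [lra| | |].
  - intros t Ht. apply (deriv_ext (y - mult_real_fct L0 id)%F); [intro; reflexivity|].
    apply derivable_pt_lim_minus; [apply Hyd; lra|].
    apply derivable_pt_lim_scal, derivable_pt_lim_id.
  - intros t Ht Hneg.
    assert (Ht0 : 0 < t) by lra.
    assert (Hyt : TA < y t) by (apply HTy; lra).
    assert (HDC := HA (y t) (L0 * t) ltac:(lra) ltac:(lra)).
    specialize (Hq t ltac:(lra)). apply Rabs_def2 in Hq.
    assert (Hprod : g t / h t * (h t / h (L0 * t)) = g t / h (L0 * t)).
    { field. split; apply Rgt_not_eq, Hh; [|lra]. left; apply Rmult_lt_0_compat; lra. }
    rewrite Hprod in Hq.
    assert (Hb := alg_low (g t) (h (L0 * t)) (h (y t)) K gam eta (Hgp t Ht0)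
      (Hh (L0 * t) ltac:(left; apply Rmult_lt_0_compat; lra)) (Hh (y t) ltac:(lra)) Heta HK Hgam Heta2 HDC
      ltac:(unfold K in *; lra)).
    unfold gam in *. lra.
  - exists T'. intros t Ht. specialize (HT' t Ht). lra.
Qed.

Lemma core (g h y : R -> R) (L T0 Lam : R) (HL : 0 < L) (HLam : 0 < Lam)
  (Hh : forall t, 0 <= t -> 0 < h t) (Hgp : forall t, 0 < t -> 0 < g t)
  (HAN : forall eta, 0 < eta -> exists T, 0 <= T /\
          forall s z, T <= s -> s <= z -> h z <= (1 + eta) * h s)
  (HG : lim_infty (fun t => g t / h t) L) (HT0 : 0 <= T0)
  (Hyd : forall t, T0 < t -> derivable_pt_lim y t (1 - g t / h (y t)))
  (Hyp : forall t, T0 < t -> 0 <= y t)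
  (Hyinf : forall K, exists T, forall t, T < t -> K < y t)
  (Hup : forall L1, Lam < L1 -> exists p, lim_infty (fun t => h t / h (L1 * t)) p /\ 1 - L * p < L1)
  (Hlow : forall L0, 0 < L0 -> L0 < Lam -> exists p, lim_infty (fun t => h t / h (L0 * t)) p /\ L0 < 1 - L * p) :
  lim_infty (fun t => y t / t) Lam.
Proof.
  intros eps He.
  destruct (Hup (Lam + eps/2) ltac:(lra)) as [p1 [Hp1 Hg1]].
  assert (Hm : 0 < Rmin eps Lam) by (apply Rmin_pos; lra).
  assert (Hm1 : Rmin eps Lam <= eps) by apply Rmin_l.
  assert (Hm2 : Rmin eps Lam <= Lam) by apply Rmin_r.
  destruct (Hlow (Lam - Rmin eps Lam / 2) ltac:(lra) ltac:(lra)) as [p0 [Hp0 Hg0]].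
  destruct (core_up g h y L T0 (Lam + eps/2) p1 HL ltac:(lra) Hh Hgp HAN HG HT0 Hyd Hyp Hp1 Hg1) as [T1 HT1].
  destruct (core_low g h y L T0 (Lam - Rmin eps Lam / 2) p0 HL ltac:(lra) Hh Hgp HAN HG HT0 Hyd Hyinf Hp0 Hg0) as [T2 HT2].
  exists (Rmax (Rmax T1 T2) 1). intros t Ht.
  assert (Rmax T1 T2 <= Rmax (Rmax T1 T2) 1) by apply Rmax_l.
  assert (1 <= Rmax (Rmax T1 T2) 1) by apply Rmax_r.
  assert (T1 <= Rmax T1 T2) by apply Rmax_l. assert (T2 <= Rmax T1 T2) by apply Rmax_r.
  specialize (HT1 t ltac:(lra)). specialize (HT2 t ltac:(lra)).
  assert (Ht0 : 0 < t) by lra.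
  assert (Hu : y t / t <= Lam + eps / 2).
  { apply (Rmult_le_reg_r t); auto. unfold Rdiv. rewrite Rmult_assoc, Rinv_l; lra. }
  assert (Hl : Lam - Rmin eps Lam / 2 <= y t / t).
  { apply (Rmult_le_reg_r t); auto. unfold Rdiv. rewrite Rmult_assoc, Rinv_l; lra. }
  apply Rabs_def1; lra.
Qed.

Lemma lim_inv (a : R -> R) l : 0 < l -> lim_infty a l -> lim_infty (fun t => / a t) (/ l).
Proof.
  intros Hl Ha eps He.
  set (e := Rmin (l / 2) (eps * l * l / 2)).
  assert (He0 : 0 < e) by (unfold e; apply Rmin_pos; [lra|]; assert (0 < eps * l * l) by (repeat apply Rmult_lt_0_compat; lra); lra).
  assert (He1 : e <= l / 2) by apply Rmin_l. assert (He2 : e <= eps * l * l / 2) by apply Rmin_r.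
  destruct (Ha e He0) as [T HT]. exists T. intros t Ht. specialize (HT t Ht).
  apply Rabs_def2 in HT.
  assert (Hat : l / 2 < a t) by lra.
  replace (/ a t - / l) with ((l - a t) / (a t * l)) by (field; lra).
  unfold Rdiv. rewrite Rabs_mult, Rabs_inv, Rabs_right with (r := a t * l); [|left; apply Rmult_lt_0_compat; lra].
  assert (Hlt : Rabs (l - a t) < e) by (apply Rabs_def1; lra).
  assert (l / 2 * l <= a t * l) by (apply Rmult_le_compat_r; lra).
  assert (0 < l / 2 * l) by (apply Rmult_lt_0_compat; lra).
  apply Rlt_le_trans with (e * / (a t * l)).
  - apply Rmult_lt_compat_r; [apply Rinv_0_lt_compat; lra| auto].
  - apply Rle_trans with (eps * l * l / 2 * / (l / 2 * l)).
    + apply Rmult_le_compat; try lra.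
      * left; apply Rinv_0_lt_compat; lra.
      * apply Rinv_le_contravar; lra.
    + right. field. lra.
Qed.

Lemma Rpower_pos x y : 0 < Rpower x y.
Proof. unfold Rpower. apply exp_pos. Qed.

Lemma h_AN (f F Finv phi : R -> R) (delta : R)
  (Hfp : forall u, 0 < u -> 0 < f u)
  (HFinv : forall t, 0 <= t -> 0 < Finv t /\ F (Finv t) = t)
  (Fdecr : forall u v, 0 < u -> u < v -> F v < F u)
  (Hdelta : 0 < delta)
  (Hphi : forall a b, 0 < a -> a < b -> b < delta -> phi a <= phi b)
  (Hfphi : lim_0plus (fun u => f u / phi u) 1) :
  forall eta, 0 < eta -> exists T, 0 <= T /\
    forall s z, T <= s -> s <= z -> f (Finv z) <= (1 + eta) * f (Finv s).
Proof.
  intros eta Heta.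
  set (e := eta / (2 + eta)).
  assert (He : 0 < e) by (unfold e; apply Rdiv_lt_0_compat; lra).
  assert (He1 : e < 1) by (unfold e; apply (Rmult_lt_reg_r (2 + eta)); [lra|]; unfold Rdiv; rewrite Rmult_assoc, Rinv_l; lra).
  destruct (Hfphi e He) as [d [Hd Hc]].
  set (d' := Rmin d delta).
  assert (Hd' : 0 < d') by (apply Rmin_pos; lra).
  assert (Hd'1 : d' <= d) by apply Rmin_l. assert (Hd'2 : d' <= delta) by apply Rmin_r.
  exists (Rmax (F (d'/2)) 0 + 1). split; [assert (0 <= Rmax (F (d'/2)) 0) by apply Rmax_r; lra|].
  intros s z Hs Hsz.
  assert (F (d'/2) <= Rmax (F (d'/2)) 0) by apply Rmax_l.
  assert (0 <= Rmax (F (d'/2)) 0) by apply Rmax_r.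
  assert (Hu := Finv_lt F Finv HFinv Fdecr (d'/2) s ltac:(lra) ltac:(lra) ltac:(lra)).
  destruct (HFinv s ltac:(lra)) as [Hu0 _]. destruct (HFinv z ltac:(lra)) as [Hv0 _].
  assert (Hvu : Finv z <= Finv s).
  { destruct Hsz as [Hlt|Heq]; [left; apply (Finv_decr F Finv HFinv Fdecr); lra| subst; lra]. }
  assert (Hphiv : phi (Finv z) <= phi (Finv s)).
  { destruct Hvu as [Hlt|Heq]; [apply Hphi; lra| rewrite Heq; lra]. }
  assert (Hcu := Hc (Finv s) ltac:(lra)). assert (Hcv := Hc (Finv z) ltac:(lra)).
  apply Rabs_def2 in Hcu. apply Rabs_def2 in Hcv.
  assert (Hcv' : f (Finv z) / phi (Finv z) < 1 + e) by lra.
  assert (Hcu' : 1 - e < f (Finv s) / phi (Finv s)) by lra.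
  assert (Hfu := Hfp (Finv s) Hu0). assert (Hfv := Hfp (Finv z) Hv0).
  assert (Hpos : forall w, 0 < f w -> 1 - e < f w / phi w -> 0 < phi w).
  { intros w Hw Hr. destruct (Rlt_le_dec 0 (phi w)) as [|Hle]; auto.
    destruct Hle as [Hlt|Heq].
    - assert (f w / phi w < 0); [|lra].
      unfold Rdiv. rewrite <- (Rmult_0_r (f w)). apply Rmult_lt_compat_l; auto. apply Rinv_lt_0_compat; auto.
    - rewrite Heq in Hr. unfold Rdiv in Hr. rewrite Rinv_0, Rmult_0_r in Hr. lra. }
  assert (Hpu := Hpos _ Hfu ltac:(lra)). assert (Hpv := Hpos _ Hfv ltac:(lra)).
  assert (H1 : f (Finv z) < (1 + e) * phi (Finv z)).
  { apply (Rmult_lt_compat_r (phi (Finv z))) in Hcv'; auto. unfold Rdiv in Hcv'. rewrite Rmult_assoc, Rinv_l in Hcv'; lra. }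
  assert (H2 : (1 - e) * phi (Finv s) < f (Finv s)).
  { apply (Rmult_lt_compat_r (phi (Finv s))) in Hcu'; auto. unfold Rdiv in Hcu'. rewrite Rmult_assoc, Rinv_l in Hcu'; lra. }
  assert (Hee : (1 + e) = (1 + eta) * (1 - e)) by (unfold e; field; lra).
  assert (Hz : (1 + e) * phi (Finv z) <= (1 + e) * phi (Finv s)) by (apply Rmult_le_compat_l; lra).
  assert (Hz2 : (1 + e) * phi (Finv s) = (1 + eta) * ((1 - e) * phi (Finv s))) by (rewrite Hee; ring).
  assert ((1 + eta) * ((1 - e) * phi (Finv s)) <= (1 + eta) * f (Finv s)) by (apply Rmult_le_compat_l; lra).
  lra.
Qed.

Lemma lim_ext_ev (a b : R -> R) l T : (forall t, T < t -> a t = b t) ->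
  lim_infty a l -> lim_infty b l.
Proof.
  intros Hab Ha eps He. destruct (Ha eps He) as [T1 H1]. exists (Rmax T T1).
  intros t Ht. assert (T <= Rmax T T1) by apply Rmax_l. assert (T1 <= Rmax T T1) by apply Rmax_r.
  rewrite <- Hab by lra. apply H1. lra.
Qed.

Lemma RV_ratio (h : R -> R) lam a : 0 < lam ->
  (forall t, 0 <= t -> 0 < h t) ->
  lim_infty (fun t => h (lam * t) / h t) (Rpower lam a) ->
  lim_infty (fun t => h t / h (lam * t)) (Rpower lam (- a)).
Proof.
  intros Hl Hh Hr. rewrite Rpower_Ropp.
  apply (lim_ext_ev (fun t => / (h (lam * t) / h t)) _ _ 0).
  - intros t Ht. assert (0 < h t) by (apply Hh; lra).
    assert (0 < h (lam * t)) by (apply Hh; left; apply Rmult_lt_0_compat; lra).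
    field. split; lra.
  - apply lim_inv; auto. apply Rpower_pos.
Qed.

Lemma Lam_exists (L beta : R) : 0 < L -> 1 < beta ->
  exists Lam, 0 < Lam < 1 /\ (1 - Lam) * Rpower Lam (- (beta / (beta - 1))) = L.
Proof.
  intros HL Hb. set (rho := beta / (beta - 1)).
  assert (Hrho : 0 < rho) by (unfold rho; apply Rdiv_lt_0_compat; lra).
  set (k := fun l => L - (1 - l) * Rpower l (- rho)).
  set (c := 2 * (L + 1)).
  set (b := Rpower c (- / rho)).
  set (a := Rmin (1/2) b).
  assert (Hb0 : 0 < b) by apply Rpower_pos.
  assert (Ha0 : 0 < a) by (apply Rmin_pos; lra).
  assert (Ha1 : a <= 1/2) by apply Rmin_l. assert (Hab : a <= b) by apply Rmin_r.
  assert (Hpb : Rpower b (- rho) = c).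
  { unfold b. rewrite Rpower_mult. replace (- / rho * - rho) with 1 by (field; lra).
    apply Rpower_1. unfold c; lra. }
  assert (Hpa : c <= Rpower a (- rho)).
  { rewrite <- Hpb. rewrite !Rpower_Ropp. apply Rinv_le_contravar; [apply Rpower_pos|].
    apply Rle_Rpower_l; lra. }
  assert (Hka : k a < 0).
  { unfold k. assert ((1/2) * c <= (1 - a) * Rpower a (- rho)).
    { apply Rmult_le_compat; unfold c in *; lra. }
    unfold c in *. lra. }
  assert (Hk1 : 0 < k 1) by (unfold k; lra).
  destruct (IVT_interv k a 1) as [z [Hz1 Hz2]]; auto; [|lra|].
  - intros l Hl. eapply deriv_cont.
    eapply (deriv_ext (fct_cte L - (fct_cte 1 - id) * (fun l => Rpower l (- rho)))%F).
    { intro y. reflexivity. }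
    apply derivable_pt_lim_minus; [apply derivable_pt_lim_const|].
    apply derivable_pt_lim_mult.
    + apply derivable_pt_lim_minus; [apply derivable_pt_lim_const|apply derivable_pt_lim_id].
    + apply (derivable_pt_lim_power l (- rho)). lra.
  - exists z. assert (z <> 1) by (intro; subst; lra). unfold k in Hz2. split; [lra|lra].
Qed.

Lemma lim0_to_inf (a : R -> R) l : lim_0plus a l -> lim_infty (fun t => a (/ t)) l.
Proof.
  intros H eps He. destruct (H eps He) as [d [Hd Hx]]. exists (/ d). intros t Ht.
  apply Hx. assert (0 < / d) by (apply Rinv_0_lt_compat; lra).
  split; [apply Rinv_0_lt_compat; lra|].
  rewrite <- (Rinv_inv d). apply Rinv_lt_contravar; [apply Rmult_lt_0_compat|]; lra.
Qed.

Lemma inf_to_lim0 (a : R -> R) l : lim_infty (fun t => a (/ t)) l -> lim_0plus a l.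
Proof.
  intros H eps He. destruct (H eps He) as [T HT]. exists (/ (Rmax T 1)).
  assert (1 <= Rmax T 1) by apply Rmax_r. assert (T <= Rmax T 1) by apply Rmax_l.
  split; [apply Rinv_0_lt_compat; lra|].
  intros x [Hx1 Hx2]. rewrite <- (Rinv_inv x). apply HT.
  assert (Rmax T 1 < / x).
  { rewrite <- (Rinv_inv (Rmax T 1)). apply Rinv_lt_contravar; auto.
    apply Rmult_lt_0_compat; auto. apply Rinv_0_lt_compat; lra. }
  lra.
Qed.

Lemma lim0_mult (a b : R -> R) la lb :
  lim_0plus a la -> lim_0plus b lb -> lim_0plus (fun u => a u * b u) (la * lb).
Proof.
  intros Ha Hb. apply inf_to_lim0.
  apply (lim_mult (fun t => a (/ t)) (fun t => b (/ t))); apply lim0_to_inf; auto.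
Qed.

Lemma lim0_inv (a : R -> R) l : 0 < l -> lim_0plus a l -> lim_0plus (fun u => / a u) (/ l).
Proof.
  intros Hl Ha. apply inf_to_lim0. apply (lim_inv (fun t => a (/ t))); auto. apply lim0_to_inf; auto.
Qed.

Lemma lim0_ext (a b : R -> R) l d : 0 < d -> (forall u, 0 < u < d -> a u = b u) ->
  lim_0plus a l -> lim_0plus b l.
Proof.
  intros Hd Hab Ha eps He. destruct (Ha eps He) as [d1 [Hd1 H1]].
  exists (Rmin d d1). split; [apply Rmin_pos; lra|].
  intros u Hu. assert (Rmin d d1 <= d) by apply Rmin_l. assert (Rmin d d1 <= d1) by apply Rmin_r.
  rewrite <- Hab by lra. apply H1. lra.
Qed.

Lemma lim0_comp (G U : R -> R) l : lim_0plus G l ->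
  (forall e, 0 < e -> exists T, forall t, T < t -> 0 < U t < e) ->
  lim_infty (fun t => G (U t)) l.
Proof.
  intros HG HU eps He. destruct (HG eps He) as [d [Hd H1]]. destruct (HU d Hd) as [T HT].
  exists T. intros t Ht. apply H1. apply HT. auto.
Qed.

Lemma f_AM (f phi : R -> R) (delta : R)
  (Hfp : forall u, 0 < u -> 0 < f u)
  (Hdelta : 0 < delta)
  (Hphi : forall a b, 0 < a -> a < b -> b < delta -> phi a <= phi b)
  (Hfphi : lim_0plus (fun u => f u / phi u) 1) :
  forall eta, 0 < eta -> exists d, 0 < d /\
    forall a b, 0 < a -> a <= b -> b < d -> f a <= (1 + eta) * f b.
Proof.
  intros eta Heta.
  set (e := eta / (2 + eta)).
  assert (He : 0 < e) by (unfold e; apply Rdiv_lt_0_compat; lra).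
  assert (He1 : e < 1) by (unfold e; apply (Rmult_lt_reg_r (2 + eta)); [lra|]; unfold Rdiv; rewrite Rmult_assoc, Rinv_l; lra).
  destruct (Hfphi e He) as [d [Hd Hc]].
  set (d' := Rmin d delta).
  assert (Hd' : 0 < d') by (apply Rmin_pos; lra).
  assert (Hd'1 : d' <= d) by apply Rmin_l. assert (Hd'2 : d' <= delta) by apply Rmin_r.
  exists d'. split; auto.
  intros a b Ha Hab Hb.
  assert (Hphiv : phi a <= phi b).
  { destruct Hab as [Hlt|Heq]; [apply Hphi; lra| rewrite Heq; lra]. }
  assert (Hcu := Hc b ltac:(lra)). assert (Hcv := Hc a ltac:(lra)).
  apply Rabs_def2 in Hcu. apply Rabs_def2 in Hcv.
  assert (Hcv' : f a / phi a < 1 + e) by lra.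
  assert (Hcu' : 1 - e < f b / phi b) by lra.
  assert (Hfu := Hfp b ltac:(lra)). assert (Hfv := Hfp a Ha).
  assert (Hpos : forall w, 0 < f w -> 1 - e < f w / phi w -> 0 < phi w).
  { intros w Hw Hr. destruct (Rlt_le_dec 0 (phi w)) as [|Hle]; auto.
    destruct Hle as [Hlt|Heq].
    - assert (f w / phi w < 0); [|lra].
      unfold Rdiv. rewrite <- (Rmult_0_r (f w)). apply Rmult_lt_compat_l; auto. apply Rinv_lt_0_compat; auto.
    - rewrite Heq in Hr. unfold Rdiv in Hr. rewrite Rinv_0, Rmult_0_r in Hr. lra. }
  assert (Hpu := Hpos _ Hfu ltac:(lra)). assert (Hpv := Hpos _ Hfv ltac:(lra)).
  assert (H1 : f a < (1 + e) * phi a).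
  { apply (Rmult_lt_compat_r (phi a)) in Hcv'; auto. unfold Rdiv in Hcv'. rewrite Rmult_assoc, Rinv_l in Hcv'; lra. }
  assert (H2 : (1 - e) * phi b < f b).
  { apply (Rmult_lt_compat_r (phi b)) in Hcu'; auto. unfold Rdiv in Hcu'. rewrite Rmult_assoc, Rinv_l in Hcu'; lra. }
  assert (Hee : (1 + e) = (1 + eta) * (1 - e)) by (unfold e; field; lra).
  assert (Hz : (1 + e) * phi a <= (1 + e) * phi b) by (apply Rmult_le_compat_l; lra).
  assert (Hz2 : (1 + e) * phi b = (1 + eta) * ((1 - e) * phi b)) by (rewrite Hee; ring).
  assert ((1 + eta) * ((1 - e) * phi b) <= (1 + eta) * f b) by (apply Rmult_le_compat_l; lra).
  lra.
Qed.

Lemma Rpower_base1 y : Rpower 1 y = 1.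
Proof. unfold Rpower. rewrite ln_1, Rmult_0_r. apply exp_0. Qed.

Lemma Rpower_inv_pow x b : 0 < x -> 0 < b -> Rpower (Rpower x (/ b)) b = x.
Proof. intros Hx Hb. rewrite Rpower_mult. replace (/ b * b) with 1 by (field; lra). apply Rpower_1; auto. Qed.

Definition AMprop (f : R -> R) := forall eta, 0 < eta -> exists d, 0 < d /\
    forall a b, 0 < a -> a <= b -> b < d -> f a <= (1 + eta) * f b.

Lemma UL (f : R -> R) (beta : R) (Hbeta : 0 < beta)
  (Hfp : forall u, 0 < u -> 0 < f u) (HRV : RV0 f beta) (HAM : AMprop f) :
  forall eps, 0 < eps -> eps <= 1 -> exists th d, 0 < th < 1 /\ 0 < d /\
    forall a b, 0 < b < d -> (1 - th) * b <= a <= (1 + th) * b ->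
      (1 - eps) * f b <= f a <= (1 + eps) * f b.
Proof.
  intros eps He He1.
  set (th1 := Rpower (1 + eps/3) (/ beta) - 1).
  set (th2 := 1 - Rpower (1 - eps/3) (/ beta)).
  assert (Hib : 0 < / beta) by (apply Rinv_0_lt_compat; lra).
  assert (Hth1 : 0 < th1).
  { unfold th1. assert (Rpower 1 (/ beta) < Rpower (1 + eps/3) (/ beta)) by (apply Rlt_Rpower_l; lra).
    rewrite Rpower_base1 in H. lra. }
  assert (Hth2 : 0 < th2 < 1).
  { unfold th2. assert (Rpower (1 - eps/3) (/ beta) < Rpower 1 (/ beta)) by (apply Rlt_Rpower_l; lra).
    rewrite Rpower_base1 in H. assert (0 < Rpower (1 - eps/3) (/ beta)) by apply Rpower_pos. lra. }
  set (th := Rmin (Rmin th1 th2) (1/2)).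
  assert (Hth : 0 < th) by (unfold th; repeat apply Rmin_pos; lra).
  assert (Hthl : th <= th1 /\ th <= th2 /\ th <= 1/2).
  { unfold th. assert (Rmin th1 th2 <= th1) by apply Rmin_l. assert (Rmin th1 th2 <= th2) by apply Rmin_r.
    assert (Rmin (Rmin th1 th2) (1/2) <= Rmin th1 th2) by apply Rmin_l.
    assert (Rmin (Rmin th1 th2) (1/2) <= 1/2) by apply Rmin_r. lra. }
  assert (Hup : Rpower (1 + th) beta <= 1 + eps / 3).
  { apply Rle_trans with (Rpower (1 + th1) beta).
    - apply Rle_Rpower_l; lra.
    - unfold th1. replace (1 + (Rpower (1 + eps / 3) (/ beta) - 1)) with (Rpower (1 + eps / 3) (/ beta)) by ring.
      rewrite Rpower_inv_pow; lra. }
  assert (Hlo : 1 - eps / 3 <= Rpower (1 - th) beta).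
  { apply Rle_trans with (Rpower (1 - th2) beta).
    - unfold th2. replace (1 - (1 - Rpower (1 - eps / 3) (/ beta))) with (Rpower (1 - eps / 3) (/ beta)) by ring.
      rewrite Rpower_inv_pow; lra.
    - apply Rle_Rpower_l; lra. }
  set (eta := eps / 10).
  destruct (HAM eta ltac:(unfold eta; lra)) as [d1 [Hd1 HA]].
  destruct (HRV (1 + th) ltac:(lra) eta ltac:(unfold eta; lra)) as [d2 [Hd2 H2]].
  destruct (HRV (1 - th) ltac:(lra) eta ltac:(unfold eta; lra)) as [d3 [Hd3 H3]].
  exists th, (Rmin (Rmin (d1/2) d2) d3). split; [lra|]. split; [repeat apply Rmin_pos; lra|].
  intros a b Hb Hab.
  assert (Hd : b < d1/2 /\ b < d2 /\ b < d3).
  { assert (Rmin (Rmin (d1 / 2) d2) d3 <= Rmin (d1 / 2) d2) by apply Rmin_l.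
    assert (Rmin (Rmin (d1 / 2) d2) d3 <= d3) by apply Rmin_r.
    assert (Rmin (d1 / 2) d2 <= d1/2) by apply Rmin_l. assert (Rmin (d1 / 2) d2 <= d2) by apply Rmin_r. lra. }
  assert (Hfb := Hfp b ltac:(lra)).
  assert (Hb1 : (1 + th) * b < d1) by nra.
  assert (Ha0 : 0 < a) by nra.
  specialize (H2 b ltac:(lra)). specialize (H3 b ltac:(lra)).
  apply Rabs_def2 in H2. apply Rabs_def2 in H3.
  assert (Hq2 : f ((1 + th) * b) < (Rpower (1 + th) beta + eta) * f b).
  { assert (f ((1 + th) * b) / f b < Rpower (1 + th) beta + eta) by lra.
    apply (Rmult_lt_compat_r (f b)) in H; auto. unfold Rdiv in H. rewrite Rmult_assoc, Rinv_l in H; lra. }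
  assert (Hq3 : (Rpower (1 - th) beta - eta) * f b < f ((1 - th) * b)).
  { assert (Rpower (1 - th) beta - eta < f ((1 - th) * b) / f b) by lra.
    apply (Rmult_lt_compat_r (f b)) in H; auto. unfold Rdiv in H. rewrite Rmult_assoc, Rinv_l in H; lra. }
  assert (HA1 := HA a ((1 + th) * b) Ha0 ltac:(lra) Hb1).
  assert (HA2 := HA ((1 - th) * b) a ltac:(nra) ltac:(lra) ltac:(lra)).
  unfold eta in *. split.
  - assert ((1 - eps / 3 - eps / 10) * f b <= (1 + eps / 10) * f a).
    { assert ((1 - eps / 3 - eps / 10) * f b <= (Rpower (1 - th) beta - eps / 10) * f b) by (apply Rmult_le_compat_r; lra).
      lra. }
    assert ((1 - eps) * (1 + eps/10) <= 1 - eps / 3 - eps / 10) by nra.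
    assert ((1 - eps) * (1 + eps/10) * f b <= (1 + eps / 10) * f a) by (eapply Rle_trans; [apply Rmult_le_compat_r; [lra|exact H0]| exact H]).
    apply (Rmult_le_reg_l (1 + eps/10)); [lra|]. lra.
  - assert ((Rpower (1 + th) beta + eps / 10) * f b <= (1 + eps / 3 + eps / 10) * f b) by (apply Rmult_le_compat_r; lra).
    assert ((1 + eps / 10) * (1 + eps / 3 + eps / 10) <= 1 + eps) by nra.
    assert (f a <= (1 + eps / 10) * ((1 + eps / 3 + eps / 10) * f b)).
    { eapply Rle_trans; [exact HA1|]. apply Rmult_le_compat_l; lra. }
    assert ((1 + eps / 10) * ((1 + eps / 3 + eps / 10) * f b) <= (1 + eps) * f b).
    { rewrite <- Rmult_assoc. apply Rmult_le_compat_r; lra. }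
    lra.
Qed.

Lemma pow_decr_le x m n : 0 <= x <= 1 -> (m <= n)%nat -> x ^ n <= x ^ m.
Proof.
  intros Hx Hmn. induction Hmn.
  - lra.
  - simpl. assert (0 <= x ^ m0) by (apply pow_le; lra).
    assert (x * x ^ m0 <= 1 * x ^ m0) by (apply Rmult_le_compat_r; lra). lra.
Qed.

Lemma layer lam u0 u : 0 < lam < 1 -> 0 < u0 -> 0 < u <= u0 ->
  exists n, lam ^ (S n) * u0 < u <= lam ^ n * u0.
Proof.
  intros Hl Hu0 Hu.
  destruct (pow_lt_1_zero lam ltac:(rewrite Rabs_right; lra) (u / u0) ltac:(apply Rdiv_lt_0_compat; lra)) as [N HN].
  specialize (HN N (le_n N)). rewrite Rabs_right in HN by (apply Rle_ge, pow_le; lra).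
  assert (HN' : lam ^ N * u0 < u).
  { apply (Rmult_lt_compat_r u0) in HN; auto. unfold Rdiv in HN. rewrite Rmult_assoc, Rinv_l, Rmult_1_r in HN; lra. }
  clear HN. revert HN'. induction N as [|k IH]; intros Hk.
  - simpl in Hk. lra.
  - destruct (Rle_lt_dec u (lam ^ k * u0)) as [Hle|Hlt].
    + exists k. split; auto.
    + apply IH; auto.
Qed.

Lemma iter_up (r : R -> R) lam u0 A B V : 0 < lam < 1 -> 0 < u0 -> 0 <= A < 1 ->
  B / (1 - A) < V ->
  (forall u, 0 < u <= u0 -> r (lam * u) <= A * r u + B) ->
  (exists M, forall w, lam * u0 <= w <= u0 -> r w <= M) ->
  exists u1, 0 < u1 /\ forall u, 0 < u < u1 -> r u <= V.
Proof.
  intros Hl Hu0 HA HV Hrec [M HM].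
  set (c := B / (1 - A)).
  assert (Hc : A * c + B = c) by (unfold c; field; lra).
  set (M' := Rmax M c).
  assert (HM1 : M <= M') by apply Rmax_l. assert (HM2 : c <= M') by apply Rmax_r.
  assert (HP : forall n w, lam * u0 <= w <= u0 -> r (lam ^ n * w) <= A ^ n * (M' - c) + c).
  { induction n as [|n IH]; intros w Hw.
    - simpl. rewrite Rmult_1_l. specialize (HM w Hw). lra.
    - simpl. rewrite (Rmult_assoc lam).
      assert (Hpn : 0 < lam ^ n) by (apply pow_lt; lra).
      assert (Hpn1 : lam ^ n <= 1) by (rewrite <- (pow1 n); apply pow_incr; lra).
      assert (Hw0 : 0 < w) by nra.
      assert (Hz : 0 < lam ^ n * w <= u0) by (split; [apply Rmult_lt_0_compat; lra| nra]).
      specialize (Hrec _ Hz). specialize (IH w Hw).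
      assert (A * r (lam ^ n * w) <= A * (A ^ n * (M' - c) + c)) by (apply Rmult_le_compat_l; lra).
      assert (E : A * (A ^ n * (M' - c) + c) = A * A ^ n * (M' - c) + A * c) by ring.
      lra. }
  set (y := (V - c) / (M' - c + 1)).
  assert (Hy : 0 < y) by (unfold y; apply Rdiv_lt_0_compat; [unfold c in *; lra| lra]).
  idtac.
destruct (pow_lt_1_zero A ltac:(rewrite Rabs_right; lra) y Hy) as [N HN].
    specialize (HN N (le_n N)). rewrite Rabs_right in HN by (apply Rle_ge, pow_le; lra).
    assert (HAN : A ^ N * (M' - c) < V - c).
    { assert (A ^ N * (M' - c) <= A ^ N * (M' - c + 1)) by (assert (0 <= A ^ N) by (apply pow_le; lra); nra).
      assert (A ^ N * (M' - c + 1) < y * (M' - c + 1)) by (apply Rmult_lt_compat_r; lra).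
      replace (y * (M' - c + 1)) with (V - c) in H0 by (unfold y; field; lra). lra. }
    exists (lam ^ (S N) * u0). split; [apply Rmult_lt_0_compat; [apply pow_lt|]; lra|].
    intros u Hu.
    assert (HSN : lam ^ S N <= 1) by (rewrite <- (pow1 (S N)); apply pow_incr; lra).
    destruct (layer lam u0 u Hl Hu0 ltac:(nra)) as [n [Hn1 Hn2]].
    assert (HnN : (N < n)%nat).
    { destruct (Nat.lt_ge_cases N n) as [|Hge]; auto. exfalso.
      assert (lam ^ (S N) <= lam ^ (S n)) by (apply pow_decr_le; [lra|lia]). nra. }
    assert (Hpn : 0 < lam ^ n) by (apply pow_lt; lra).
    set (w := u / lam ^ n).
    assert (Hw : lam ^ n * w = u) by (unfold w; field; lra).
    assert (Hw1 : lam * u0 <= w <= u0).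
    { split; apply (Rmult_le_reg_l (lam ^ n)); auto; rewrite Hw; simpl in Hn1; nra. }
    rewrite <- Hw. specialize (HP n w Hw1).
    assert (A ^ n <= A ^ N) by (apply pow_decr_le; [lra|lia]).
    assert (A ^ n * (M' - c) <= A ^ N * (M' - c)) by (apply Rmult_le_compat_r; lra).
    lra.
Qed.

Lemma iter_low (r : R -> R) lam u0 A B V : 0 < lam < 1 -> 0 < u0 -> 0 <= A < 1 ->
  V < B / (1 - A) ->
  (forall u, 0 < u <= u0 -> A * r u + B <= r (lam * u)) ->
  (exists m, forall w, lam * u0 <= w <= u0 -> m <= r w) ->
  exists u1, 0 < u1 /\ forall u, 0 < u < u1 -> V <= r u.
Proof.
  intros Hl Hu0 HA HV Hrec [m Hm].
  destruct (iter_up (fun u => - r u) lam u0 A (- B) (- V) Hl Hu0 HA) as [u1 [Hu1 H]].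
  - replace (- B / (1 - A)) with (- (B / (1 - A))) by (field; lra). lra.
  - intros u Hu. specialize (Hrec u Hu). lra.
  - exists (- m). intros w Hw. specialize (Hm w Hw). lra.
  - exists u1. split; auto. intros u Hu. specialize (H u Hu). lra.
Qed.

Lemma alg_A s k : 0 < s <= 1 -> 0 < k < 1 ->
  (1 + k * s) * (1 - s) < 1 /\ 0 <= (1 - k * s) * (1 - s) /\ (1 - k * s) * (1 - s) < 1.
Proof.
  intros Hs Hk. assert (0 < k * s) by nra. assert (k * s <= k) by nra. assert (k * s < s) by nra.
  assert (0 <= 1 - s) by lra.
  repeat split.
  - assert ((1 + k * s) * (1 - s) = 1 - s + k * s * (1 - s)) by ring.
    assert (k * s * (1 - s) <= k * s) by nra. lra.
  - apply Rmult_le_pos; lra.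
  - assert ((1 - k * s) * (1 - s) <= 1 - s) by nra. lra.
Qed.

Lemma alg_Bup s k X : 0 < s <= 1 -> 0 < k < 1 -> 0 < X ->
  (1 + k * s) * X / (1 - (1 + k * s) * (1 - s)) < (1 + k) * (1 + k) * X / (s * (1 - k)).
Proof.
  intros Hs Hk HX.
  assert (H1 : 0 < 1 - (1 + k * s) * (1 - s)) by nra.
  assert (H2 : 0 < s * (1 - k)) by nra.
  apply (Rmult_lt_reg_r ((1 - (1 + k * s) * (1 - s)) * (s * (1 - k)))); [nra|].
  replace ((1 + k * s) * X / (1 - (1 + k * s) * (1 - s)) * ((1 - (1 + k * s) * (1 - s)) * (s * (1 - k))))
    with ((1 + k * s) * X * (s * (1 - k))) by (field; nra).
  replace ((1 + k) * (1 + k) * X / (s * (1 - k)) * ((1 - (1 + k * s) * (1 - s)) * (s * (1 - k))))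
    with ((1 + k) * (1 + k) * X * (1 - (1 + k * s) * (1 - s))) by (field; nra).
  assert (E : 1 - (1 + k * s) * (1 - s) = s * (1 - k + k * s)) by ring.
  rewrite E.
  assert ((1 + k * s) * (1 - k) < (1 + k) * (1 + k) * (1 - k + k * s)) by nra.
  assert (0 < X * s) by nra.
  nra.
Qed.

Lemma alg_Blow s k X : 0 < s <= 1 -> 0 < k < 1 -> 0 < X ->
  X * (1 - k) * (1 - k) / ((1 + k) * (1 + k) * s) <
  X * (1 - k * s) / (1 + k * s) / (1 - (1 - k * s) * (1 - s)).
Proof.
  intros Hs Hk HX.
  assert (H1 : 0 < 1 - (1 - k * s) * (1 - s)) by nra.
  assert (E : 1 - (1 - k * s) * (1 - s) = s * (1 + k - k * s)) by ring.
  rewrite E.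
  assert (H3 : 0 < 1 + k - k * s) by nra.
  assert (H4 : 0 < 1 + k * s) by nra.
  assert (H5 : s <> 0) by lra. assert (H6 : 1 + k * s <> 0) by lra. assert (H7 : 1 + k - k * s <> 0) by lra.
  assert (H8 : 1 + k <> 0) by lra.
  apply (Rmult_lt_reg_r ((1 + k) * (1 + k) * s * ((1 + k * s) * (s * (1 + k - k * s))))); [repeat apply Rmult_lt_0_compat; lra|].
  replace (X * (1 - k) * (1 - k) / ((1 + k) * (1 + k) * s) * ((1 + k) * (1 + k) * s * ((1 + k * s) * (s * (1 + k - k * s)))))
    with (X * (1 - k) * (1 - k) * ((1 + k * s) * (s * (1 + k - k * s)))) by (field; auto).
  replace (X * (1 - k * s) / (1 + k * s) / (s * (1 + k - k * s)) * ((1 + k) * (1 + k) * s * ((1 + k * s) * (s * (1 + k - k * s)))))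
    with (X * (1 - k * s) * ((1 + k) * (1 + k) * s)) by (field; auto).
  assert ((1 - k) * (1 - k) * (1 + k * s) * (1 + k - k * s) < (1 - k * s) * ((1 + k) * (1 + k))).
  { assert ((1 - k) * (1 + k * s) <= (1 + k) * (1 - k * s)) by nra.
    assert ((1 - k) * (1 + k - k * s) < (1 + k)) by nra.
    assert (0 < 1 - k) by lra. assert (0 < 1 + k * s) by nra.
    assert (Ea : (1 - k) * (1 - k) * (1 + k * s) * (1 + k - k * s) = ((1 - k) * (1 + k * s)) * ((1 - k) * (1 + k - k * s))) by ring.
    assert (Eb : (1 - k * s) * ((1 + k) * (1 + k)) = ((1 + k) * (1 - k * s)) * (1 + k)) by ring.
    rewrite Ea, Eb.
    assert (0 < (1 - k) * (1 + k * s)) by nra. assert (0 < (1 - k) * (1 + k - k * s)) by nra.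
    assert (0 < (1 + k) * (1 - k * s)) by nra.
    apply Rle_lt_trans with (((1 + k) * (1 - k * s)) * ((1 - k) * (1 + k - k * s))).
    - apply Rmult_le_compat_r; lra.
    - apply Rmult_lt_compat_l; lra. }
  assert (0 < X * s) by nra.
  nra.
Qed.

Lemma alg_final e : 0 < e <= 1 ->
  (1 + e / 40) ^ 4 * (1 + e / 3) <= (1 + e) * (1 - e / 40) ^ 3.
Proof.
  intros He. set (k := e / 40).
  assert (Hk : 0 < k <= 1/40) by (unfold k; lra).
  assert (H1 : (1 + k) ^ 4 <= 1 + 5 * k) by (simpl; nra).
  assert (H2 : 1 - 3 * k <= (1 - k) ^ 3) by (simpl; nra).
  assert ((1 + 5 * k) * (1 + e / 3) <= (1 + e) * (1 - 3 * k)) by (unfold k; nra).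
  assert ((1 + k) ^ 4 * (1 + e / 3) <= (1 + 5 * k) * (1 + e / 3)) by (apply Rmult_le_compat_r; lra).
  assert ((1 + e) * (1 - 3 * k) <= (1 + e) * (1 - k) ^ 3) by (apply Rmult_le_compat_l; lra).
  lra.
Qed.

Lemma div_le_h a b c : 0 < c -> a <= b * c -> a / c <= b.
Proof. intros Hc H. apply (Rmult_le_reg_r c); auto. replace (a / c * c) with a by (field; lra). lra. Qed.

Lemma le_div_h a b c : 0 < c -> b * c <= a -> b <= a / c.
Proof. intros Hc H. apply (Rmult_le_reg_r c); auto. replace (a / c * c) with a by (field; lra). lra. Qed.

Lemma rec_alg lam p eta u Fu Fl fu fl fx :
  0 < lam < 1 -> 0 < p -> 0 < eta < 1 -> 0 < u -> 0 < Fu -> 0 < fu -> 0 < fl -> 0 < fx ->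
  Fl = Fu + (1 - lam) * u / fx ->
  fx <= (1 + eta) * fu -> fl <= (1 + eta) * fx ->
  (1 - eta) * (lam * p) <= fl / fu <= (1 + eta) * (lam * p) ->
  Fl * fl / (lam * u) <= (1 + eta) * p * (Fu * fu / u) + (1 + eta) * (1 - lam) / lam /\
  (1 - eta) * p * (Fu * fu / u) + (1 - lam) * (1 - eta) * p / (1 + eta) <= Fl * fl / (lam * u).
Proof.
  intros Hl Hp He Hu HFu Hfu Hfl Hfx EFl Hx1 Hx2 [Hw1 Hw2].
  set (w := fl / fu) in *. set (q := fl / fx).
  set (ru := Fu * fu / u).
  assert (Hru : 0 < ru) by (unfold ru; apply Rdiv_lt_0_compat; [apply Rmult_lt_0_compat|]; lra).
  assert (E : Fl * fl / (lam * u) = ru * w / lam + (1 - lam) / lam * q).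
  { unfold ru, w, q. rewrite EFl. field. lra. }
  rewrite E.
  assert (Hq1 : q <= 1 + eta).
  { unfold q. apply (Rmult_le_reg_r fx); auto. unfold Rdiv. rewrite Rmult_assoc, Rinv_l; lra. }
  assert (Hq2 : w / (1 + eta) <= q).
  { unfold q, w. unfold Rdiv. rewrite Rmult_assoc. apply Rmult_le_compat_l; [lra|].
    rewrite <- Rinv_mult. apply Rinv_le_contravar; [lra|]. lra. }
  assert (Hx : 0 < (1 - lam) / lam) by (apply Rdiv_lt_0_compat; lra).
  split.
  - assert (ru * w / lam <= (1 + eta) * p * ru).
    { apply div_le_h; [lra|].
      replace ((1 + eta) * p * ru * lam) with (ru * ((1 + eta) * (lam * p))) by ring.
      apply Rmult_le_compat_l; lra. }
    assert ((1 - lam) / lam * q <= (1 - lam) / lam * (1 + eta)) by (apply Rmult_le_compat_l; lra).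
    replace ((1 + eta) * (1 - lam) / lam) with ((1 - lam) / lam * (1 + eta)) by (field; lra).
    lra.
  - assert ((1 - eta) * p * ru <= ru * w / lam).
    { apply le_div_h; [lra|].
      replace ((1 - eta) * p * ru * lam) with (ru * ((1 - eta) * (lam * p))) by ring.
      apply Rmult_le_compat_l; lra. }
    assert ((1 - lam) / lam * ((1 - eta) * (lam * p) / (1 + eta)) <= (1 - lam) / lam * q).
    { apply Rmult_le_compat_l; [lra|]. eapply Rle_trans; [|exact Hq2].
      unfold Rdiv. apply Rmult_le_compat_r; [left; apply Rinv_0_lt_compat; lra| lra]. }
    replace ((1 - lam) * (1 - eta) * p / (1 + eta)) with ((1 - lam) / lam * ((1 - eta) * (lam * p) / (1 + eta))) by (field; lra).
    lra.
Qed.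

Lemma r_cont (f F : R -> R) (Hfc : continuity f)
  (HFd : forall u, 0 < u -> derivable_pt_lim F u (- / f u)) :
  forall c, 0 < c -> continuity_pt (fun u => F u * f u / u) c.
Proof.
  intros c Hc. change (continuity_pt (div_fct (mult_fct F f) id) c).
  apply continuity_pt_div.
  - apply continuity_pt_mult; [apply (deriv_cont _ _ _ (HFd c Hc))| apply Hfc].
  - apply derivable_continuous_pt. exists 1. apply derivable_pt_lim_id.
  - unfold id. lra.
Qed.

Lemma r_bounds (f F : R -> R) (beta : R) (Hfc : continuity f)
  (Hfp : forall u, 0 < u -> 0 < f u)
  (HFd : forall u, 0 < u -> derivable_pt_lim F u (- / f u))
  (HFpos : forall u, 0 < u < 1 -> 0 < F u)
  (Hb : 1 < beta) (HRV : RV0 f beta) (HAM : AMprop f) :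
  forall eps, 0 < eps <= 1 -> exists c1 d, 0 < c1 /\ 0 < d /\
    forall u, 0 < u < d -> c1 <= F u * f u / u <= (1 + eps) * c1.
Proof.
  intros eps He.
  set (lam := Rpower (1 + eps/3) (- / beta)).
  assert (Hib : 0 < / beta) by (apply Rinv_0_lt_compat; lra).
  assert (Hl0 : 0 < lam) by apply Rpower_pos.
  assert (Hl1 : lam < 1).
  { unfold lam. rewrite Rpower_Ropp.
    assert (Rpower 1 (/ beta) < Rpower (1 + eps/3) (/ beta)) by (apply Rlt_Rpower_l; lra).
    rewrite Rpower_base1 in H. assert (H0 : / Rpower (1 + eps / 3) (/ beta) < / 1) by (apply Rinv_lt_contravar; lra). rewrite Rinv_1 in H0. exact H0. }
  set (p := Rpower lam (beta - 1)).
  assert (Hp0 : 0 < p) by apply Rpower_pos.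
  assert (Hp1 : p < 1).
  { unfold p. assert (Rpower lam (beta - 1) < Rpower 1 (beta - 1)) by (apply Rlt_Rpower_l; lra).
    rewrite Rpower_base1 in H. exact H. }
  assert (Hlb : Rpower lam beta = lam * p).
  { unfold p. rewrite <- (Rpower_1 lam) at 2 by lra. rewrite <- Rpower_plus. f_equal. ring. }
  assert (Hlp : lam * p = / (1 + eps / 3)).
  { rewrite <- Hlb. unfold lam. rewrite Rpower_mult. replace (- / beta * beta) with (Ropp 1) by (field; lra).
    rewrite Rpower_Ropp, Rpower_1; lra. }
  set (s := 1 - p). set (k := eps / 40). set (eta := k * s).
  assert (Hs : 0 < s <= 1) by (unfold s; lra).
  assert (Hk : 0 < k < 1) by (unfold k; lra).
  assert (Heta : 0 < eta < 1) by (unfold eta; split; nra).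
  destruct (HAM eta ltac:(lra)) as [d1 [Hd1 HA]].
  assert (Hel : 0 < eta * (lam * p)) by (apply Rmult_lt_0_compat; [lra|apply Rmult_lt_0_compat; lra]).
  destruct (HRV lam Hl0 (eta * (lam * p)) Hel) as [d2 [Hd2 Hr2]].
  set (u0 := Rmin (Rmin d1 d2) 1 / 2).
  assert (Hu0 : 0 < u0 /\ u0 < d1 /\ u0 < d2 /\ u0 < 1).
  { unfold u0. assert (Rmin (Rmin d1 d2) 1 <= Rmin d1 d2) by apply Rmin_l.
    assert (Rmin (Rmin d1 d2) 1 <= 1) by apply Rmin_r.
    assert (Rmin d1 d2 <= d1) by apply Rmin_l. assert (Rmin d1 d2 <= d2) by apply Rmin_r.
    assert (0 < Rmin (Rmin d1 d2) 1) by (repeat apply Rmin_pos; lra). lra. }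
  set (r := fun u => F u * f u / u).
  assert (Hrec : forall u, 0 < u <= u0 ->
     r (lam * u) <= (1 + eta) * p * r u + (1 + eta) * (1 - lam) / lam /\
     (1 - eta) * p * r u + (1 - lam) * (1 - eta) * p / (1 + eta) <= r (lam * u)).
  { intros u Hu.
    destruct (MVT_cor2 F (fun w => - / f w) (lam * u) u ltac:(nra)) as [xi [Hxi1 Hxi2]].
    { intros c Hc. apply HFd. nra. }
    assert (Hxp : 0 < xi) by nra.
    assert (Hlu : 0 < lam * u) by nra.
    assert (Hfx := Hfp xi Hxp). assert (Hfu := Hfp u ltac:(lra)). assert (Hfl := Hfp (lam * u) Hlu).
    assert (HFu := HFpos u ltac:(lra)).
    assert (EFl : F (lam * u) = F u + (1 - lam) * u / f xi).
    { replace ((1 - lam) * u / f xi) with (/ f xi * (u - lam * u)) by (field; lra). lra. }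
    assert (HA1 := HA xi u Hxp ltac:(lra) ltac:(lra)).
    assert (HA2 := HA (lam * u) xi Hlu ltac:(lra) ltac:(lra)).
    specialize (Hr2 u ltac:(lra)). rewrite Hlb in Hr2. apply Rabs_def2 in Hr2.
    unfold r. apply (rec_alg lam p eta u (F u) (F (lam * u)) (f u) (f (lam * u)) (f xi)); try lra.
    }
  assert (Hcont : forall c, lam * u0 <= c <= u0 -> continuity_pt r c).
  { intros c Hc. apply (r_cont f F Hfc HFd). nra. }
  assert (Hlu0 : lam * u0 <= u0) by nra.
  destruct (continuity_ab_maj r (lam * u0) u0 Hlu0 Hcont) as [Mx [HMx _]].
  destruct (continuity_ab_min r (lam * u0) u0 Hlu0 Hcont) as [mx [Hmx _]].
  set (X := (1 - lam) / lam).
  assert (HX : 0 < X) by (unfold X; apply Rdiv_lt_0_compat; lra).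
  set (V := (1 + k) * (1 + k) * X / (s * (1 - k))).
  set (X' := (1 - lam) * p).
  assert (HX' : 0 < X') by (unfold X'; apply Rmult_lt_0_compat; lra).
  set (V' := X' * (1 - k) * (1 - k) / ((1 + k) * (1 + k) * s)).
  assert (HA01 := alg_A s k Hs Hk).
  assert (Hps : p = 1 - s) by (unfold s; ring).
  destruct (iter_up r lam u0 ((1 + eta) * p) ((1 + eta) * (1 - lam) / lam) V ltac:(lra) ltac:(lra))
    as [u1 [Hu1 HU]].
  { unfold eta. rewrite Hps. split; [apply Rmult_le_pos; nra| lra]. }
  { replace ((1 + eta) * (1 - lam) / lam) with ((1 + k * s) * X) by (unfold X, eta; field; lra).
    unfold eta. rewrite Hps. unfold V.
    replace ((1 + k * s) * X / (1 - (1 + k * s) * (1 - s))) with ((1 + k * s) * X / (1 - (1 + k * s) * (1 - s))) by reflexivity.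
    apply alg_Bup; auto. }
  { intros u Hu. apply (proj1 (Hrec u Hu)). }
  { exists (r Mx). auto. }
  destruct (iter_low r lam u0 ((1 - eta) * p) ((1 - lam) * (1 - eta) * p / (1 + eta)) V' ltac:(lra) ltac:(lra))
    as [u2 [Hu2 HL]].
  { unfold eta. rewrite Hps. lra. }
  { replace ((1 - lam) * (1 - eta) * p / (1 + eta) / (1 - (1 - eta) * p))
      with (X' * (1 - k * s) / (1 + k * s) / (1 - (1 - k * s) * (1 - s))) by (unfold X', eta; rewrite Hps; field; split; nra).
    unfold V'. apply alg_Blow; auto. }
  { intros u Hu. apply (proj2 (Hrec u Hu)). }
  { exists (r mx). auto. }
  assert (HV'0 : 0 < V').
  { unfold V'. apply Rdiv_lt_0_compat; [|repeat apply Rmult_lt_0_compat; lra].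
    repeat apply Rmult_lt_0_compat; lra. }
  assert (HVV : V <= (1 + eps) * V').
  { assert (Hf := alg_final eps He). fold k in Hf.
    assert (E1 : V = X' * (1 + k) ^ 4 * (1 + eps / 3) / ((1 + k) * (1 + k) * s * (1 - k))).
    { unfold V, X, X'. rewrite <- (Rinv_inv (1 + eps / 3)). rewrite <- Hlp. field. repeat split; nra. }
    assert (E2 : (1 + eps) * V' = X' * ((1 + eps) * (1 - k) ^ 3) / ((1 + k) * (1 + k) * s * (1 - k))).
    { unfold V'. field. repeat split; nra. }
    rewrite E1, E2. unfold Rdiv. apply Rmult_le_compat_r.
    - left. apply Rinv_0_lt_compat. repeat apply Rmult_lt_0_compat; lra.
    - rewrite Rmult_assoc. apply Rmult_le_compat_l; lra. }
  exists V', (Rmin u1 u2). split; auto. split; [apply Rmin_pos; lra|].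
  intros u Hu. assert (Rmin u1 u2 <= u1) by apply Rmin_l. assert (Rmin u1 u2 <= u2) by apply Rmin_r.
  specialize (HU u ltac:(lra)). specialize (HL u ltac:(lra)). unfold r in HU, HL. lra.
Qed.

Lemma r_ratio (f F : R -> R) (beta : R) (Hfc : continuity f)
  (Hfp : forall u, 0 < u -> 0 < f u)
  (HFd : forall u, 0 < u -> derivable_pt_lim F u (- / f u))
  (HFpos : forall u, 0 < u < 1 -> 0 < F u)
  (Hb : 1 < beta) (HRV : RV0 f beta) (HAM : AMprop f) :
  forall mu, 0 < mu -> lim_0plus (fun u => (F (mu * u) * f (mu * u) / (mu * u)) / (F u * f u / u)) 1.
Proof.
  intros mu Hmu eps' He'.
  set (eps := Rmin (eps' / 2) 1).
  assert (He : 0 < eps <= 1) by (unfold eps; split; [apply Rmin_pos; lra| apply Rmin_r]).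
  assert (He2 : eps <= eps' / 2) by apply Rmin_l.
  destruct (r_bounds f F beta Hfc Hfp HFd HFpos Hb HRV HAM eps He) as [c1 [d [Hc1 [Hd Hr]]]].
  exists (Rmin d (d / mu)). split; [apply Rmin_pos; [lra| apply Rdiv_lt_0_compat; lra]|].
  intros u Hu. assert (Rmin d (d / mu) <= d) by apply Rmin_l. assert (Rmin d (d / mu) <= d / mu) by apply Rmin_r.
  assert (Hmu' : mu * u < d).
  { assert (u < d / mu) by lra. apply (Rmult_lt_compat_l mu) in H1; auto.
    replace (mu * (d / mu)) with d in H1 by (field; lra). lra. }
  destruct (Hr u ltac:(lra)) as [H1 H2]. destruct (Hr (mu * u) ltac:(split; [nra|lra])) as [H3 H4].
  set (a := F (mu * u) * f (mu * u) / (mu * u)) in *. set (b := F u * f u / u) in *.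
  assert (Hb0 : 0 < b) by lra.
  apply Rabs_def1.
  - apply (Rplus_lt_reg_r 1). ring_simplify.
    apply Rle_lt_trans with ((1 + eps) * c1 / b).
    + unfold Rdiv. apply Rmult_le_compat_r; [left; apply Rinv_0_lt_compat; lra| lra].
    + apply Rle_lt_trans with (1 + eps).
      * apply div_le_h; auto. nra.
      * lra.
  - apply (Rplus_lt_reg_r 1). ring_simplify.
    apply Rlt_le_trans with (c1 / b).
    + apply Rlt_le_trans with (1 / (1 + eps)).
      * apply (Rmult_lt_reg_r (1 + eps)); [lra|]. unfold Rdiv. rewrite Rmult_assoc, Rinv_l, Rmult_1_r by lra. nra.
      * unfold Rdiv. rewrite Rmult_1_l. apply le_div_h; auto.
        apply (Rmult_le_reg_r (1 + eps)); [lra|]. rewrite Rmult_assoc. rewrite (Rmult_comm b), <- Rmult_assoc, Rinv_l by lra. lra.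
    + unfold Rdiv. apply Rmult_le_compat_r; [left; apply Rinv_0_lt_compat; lra| lra].
Qed.

Lemma lim0_const c : lim_0plus (fun _ => c) c.
Proof. intros eps He. exists 1. split; [lra|]. intros. rewrite Rminus_diag, Rabs_R0. lra. Qed.

Lemma F_RV (f F : R -> R) (beta : R) (Hfc : continuity f)
  (Hfp : forall u, 0 < u -> 0 < f u)
  (HFd : forall u, 0 < u -> derivable_pt_lim F u (- / f u))
  (HFpos : forall u, 0 < u < 1 -> 0 < F u)
  (Hb : 1 < beta) (HRV : RV0 f beta) (HAM : AMprop f) :
  forall mu, 0 < mu -> lim_0plus (fun u => F (mu * u) / F u) (Rpower mu (1 - beta)).
Proof.
  intros mu Hmu.
  assert (Hr := r_ratio f F beta Hfc Hfp HFd HFpos Hb HRV HAM mu Hmu).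
  assert (Hi := lim0_inv _ _ (Rpower_pos mu beta) (HRV mu Hmu)).
  assert (Hm1 := lim0_mult (fun u => F (mu * u) * f (mu * u) / (mu * u) / (F u * f u / u))
     (fun u => / (f (mu * u) / f u)) 1 (/ Rpower mu beta) Hr Hi).
  assert (Hm := lim0_mult (fun u => F (mu * u) * f (mu * u) / (mu * u) / (F u * f u / u) * / (f (mu * u) / f u))
     (fun _ => mu) _ _ Hm1 (lim0_const mu)).
  replace (Rpower mu (1 - beta)) with (1 * / Rpower mu beta * mu).
  2:{ unfold Rminus. rewrite Rpower_plus, Rpower_1, Rpower_Ropp by lra. ring. }
  apply (lim0_ext _ (fun u => F (mu * u) / F u) _ (Rmin 1 (1 / mu))) in Hm; [exact Hm| apply Rmin_pos; [lra| apply Rdiv_lt_0_compat; lra]|].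
  intros u Hu. assert (Rmin 1 (1 / mu) <= 1) by apply Rmin_l.
  assert (Rmin 1 (1 / mu) <= 1 / mu) by apply Rmin_r.
  assert (Hmu' : mu * u < 1).
  { assert (u < 1 / mu) by lra. apply (Rmult_lt_compat_l mu) in H1; auto.
    replace (mu * (1 / mu)) with 1 in H1 by (field; lra). lra. }
  assert (0 < F u) by (apply HFpos; lra). assert (0 < f u) by (apply Hfp; lra).
  assert (0 < f (mu * u)) by (apply Hfp; nra).
  field. repeat split; lra.
Qed.

Lemma Finv_to0 (F Finv : R -> R)
  (HFinv : forall t, 0 <= t -> 0 < Finv t /\ F (Finv t) = t)
  (Fdecr : forall u v, 0 < u -> u < v -> F v < F u) :
  forall e, 0 < e -> exists T, forall t, T < t -> 0 < Finv t < e.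
Proof.
  intros e He. exists (Rmax (F e) 0). intros t Ht.
  assert (F e <= Rmax (F e) 0) by apply Rmax_l. assert (0 <= Rmax (F e) 0) by apply Rmax_r.
  split; [apply HFinv; lra|]. apply (Finv_lt F Finv HFinv Fdecr); lra.
Qed.

Lemma Finv_RV (F Finv : R -> R) (beta : R)
  (HFinv : forall t, 0 <= t -> 0 < Finv t /\ F (Finv t) = t)
  (Fdecr : forall u v, 0 < u -> u < v -> F v < F u)
  (Hb : 1 < beta)
  (HFRV : forall mu, 0 < mu -> lim_0plus (fun u => F (mu * u) / F u) (Rpower mu (1 - beta))) :
  forall lam, 0 < lam ->
    lim_infty (fun t => Finv (lam * t) / Finv t) (Rpower lam (- / (beta - 1))).
Proof.
  intros lam Hlam eps He.
  set (nu := Rpower lam (- / (beta - 1))).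
  assert (Hnu : 0 < nu) by apply Rpower_pos.
  set (th := Rmin (eps / (2 * nu)) (1/2)).
  assert (Hth : 0 < th) by (unfold th; apply Rmin_pos; [apply Rdiv_lt_0_compat|]; lra).
  assert (Hth1 : th <= eps / (2 * nu)) by apply Rmin_l. assert (Hth2 : th <= 1/2) by apply Rmin_r.
  assert (Hnuth : nu * th <= eps / 2).
  { apply (Rmult_le_compat_l nu) in Hth1; [|lra]. replace (nu * (eps / (2 * nu))) with (eps / 2) in Hth1 by (field; lra). lra. }
  assert (Hnub : Rpower nu (1 - beta) = lam).
  { unfold nu. rewrite Rpower_mult. replace (- / (beta - 1) * (1 - beta)) with 1 by (field; lra). apply Rpower_1; auto. }
  assert (Hdist : forall c, 0 < c -> Rpower (nu * c) (1 - beta) = lam * Rpower c (1 - beta)).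
  { intros c Hc. rewrite <- Rpower_mult_distr by lra. rewrite Hnub. auto. }
  assert (Hup1 : Rpower (1 + th) (1 - beta) < 1).
  { replace (1 - beta) with (- (beta - 1)) by ring. rewrite Rpower_Ropp.
    assert (Rpower 1 (beta - 1) < Rpower (1 + th) (beta - 1)) by (apply Rlt_Rpower_l; lra).
    rewrite Rpower_base1 in H. assert (H0 : / Rpower (1 + th) (beta - 1) < / 1) by (apply Rinv_lt_contravar; lra).
    rewrite Rinv_1 in H0. exact H0. }
  assert (Hlo1 : 1 < Rpower (1 - th) (1 - beta)).
  { replace (1 - beta) with (- (beta - 1)) by ring. rewrite Rpower_Ropp.
    assert (Rpower (1 - th) (beta - 1) < Rpower 1 (beta - 1)) by (apply Rlt_Rpower_l; lra).
    rewrite Rpower_base1 in H. assert (0 < Rpower (1 - th) (beta - 1)) by apply Rpower_pos.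
    assert (H1 : / 1 < / Rpower (1 - th) (beta - 1)) by (apply Rinv_lt_contravar; nra).
    rewrite Rinv_1 in H1. exact H1. }
  set (mp := nu * (1 + th)). set (mm := nu * (1 - th)).
  assert (Hmp : 0 < mp) by (unfold mp; nra). assert (Hmm : 0 < mm) by (unfold mm; nra).
  assert (HUp := lim0_comp _ Finv _ (HFRV mp Hmp) (Finv_to0 F Finv HFinv Fdecr)).
  assert (HLo := lim0_comp _ Finv _ (HFRV mm Hmm) (Finv_to0 F Finv HFinv Fdecr)).
  unfold mp in HUp. rewrite Hdist in HUp by lra.
  unfold mm in HLo. rewrite Hdist in HLo by lra.
  assert (Hg1 : 0 < lam - lam * Rpower (1 + th) (1 - beta)) by nra.
  assert (Hg2 : 0 < lam * Rpower (1 - th) (1 - beta) - lam) by nra.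
  destruct (HUp _ Hg1) as [T1 HT1]. destruct (HLo _ Hg2) as [T2 HT2].
  exists (Rmax (Rmax T1 T2) 0). intros t Ht.
  assert (Rmax T1 T2 <= Rmax (Rmax T1 T2) 0) by apply Rmax_l. assert (0 <= Rmax (Rmax T1 T2) 0) by apply Rmax_r.
  assert (T1 <= Rmax T1 T2) by apply Rmax_l. assert (T2 <= Rmax T1 T2) by apply Rmax_r.
  specialize (HT1 t ltac:(lra)). specialize (HT2 t ltac:(lra)).
  apply Rabs_def2 in HT1. apply Rabs_def2 in HT2.
  destruct (HFinv t ltac:(lra)) as [Hu HFu]. destruct (HFinv (lam * t) ltac:(nra)) as [Hv HFv].
  set (u := Finv t) in *. set (v := Finv (lam * t)) in *.
  assert (Ht0 : 0 < t) by lra.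
  assert (Hvu1 : v < nu * (1 + th) * u).
  { assert (H3 : F (nu * (1 + th) * u) / F u < lam) by lra.
    rewrite HFu in H3. apply (Rmult_lt_compat_r t) in H3; auto. unfold Rdiv in H3.
    rewrite Rmult_assoc, Rinv_l, Rmult_1_r in H3 by lra.
    destruct (Rlt_le_dec v (nu * (1 + th) * u)) as [|Hle]; auto. exfalso.
    destruct Hle as [Hlt|Heq].
    - assert (F v < F (nu * (1 + th) * u)) by (apply Fdecr; [apply Rmult_lt_0_compat; [apply Rmult_lt_0_compat|]; lra|lra]). lra.
    - rewrite Heq in H3. lra. }
  assert (Hvu2 : nu * (1 - th) * u < v).
  { assert (H3 : lam < F (nu * (1 - th) * u) / F u) by lra.
    rewrite HFu in H3. apply (Rmult_lt_compat_r t) in H3; auto. unfold Rdiv in H3.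
    rewrite Rmult_assoc, Rinv_l, Rmult_1_r in H3 by lra.
    destruct (Rlt_le_dec (nu * (1 - th) * u) v) as [|Hle]; auto. exfalso.
    destruct Hle as [Hlt|Heq].
    - assert (F (nu * (1 - th) * u) < F v) by (apply Fdecr; lra). lra.
    - rewrite <- Heq in H3. lra. }
  assert (Eq : v / u * u = v) by (field; lra).
  assert (Hq1 : v / u < nu * (1 + th)) by (apply (Rmult_lt_reg_r u); auto; rewrite Eq; lra).
  assert (Hq2 : nu * (1 - th) < v / u) by (apply (Rmult_lt_reg_r u); auto; rewrite Eq; lra).
  apply Rabs_def1; lra.
Qed.

Lemma h_RV (f F Finv phi : R -> R) (delta beta : R) (Hfc : continuity f)
  (Hfp : forall u, 0 < u -> 0 < f u)
  (HFd : forall u, 0 < u -> derivable_pt_lim F u (- / f u))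
  (HF1 : F 1 = 0)
  (HFinv : forall t, 0 <= t -> 0 < Finv t /\ F (Finv t) = t)
  (Hdelta : 0 < delta)
  (Hphi : forall a b, 0 < a -> a < b -> b < delta -> phi a <= phi b)
  (Hfphi : lim_0plus (fun u => f u / phi u) 1)
  (Hb : 1 < beta) (HRV : RV0 f beta) :
  forall lam, 0 < lam ->
    lim_infty (fun t => f (Finv (lam * t)) / f (Finv t)) (Rpower lam (- (beta / (beta - 1)))).
Proof.
  intros lam Hlam.
  assert (Fdecr := F_decr f F Hfp HFd).
  assert (HFpos : forall u, 0 < u < 1 -> 0 < F u).
  { intros u Hu. rewrite <- HF1. apply Fdecr; lra. }
  assert (HAM : AMprop f) by exact (f_AM f phi delta Hfp Hdelta Hphi Hfphi).
  assert (HFRV := F_RV f F beta Hfc Hfp HFd HFpos Hb HRV HAM).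
  assert (HFiRV := Finv_RV F Finv beta HFinv Fdecr Hb HFRV lam Hlam).
  set (nu := Rpower lam (- / (beta - 1))) in *.
  assert (Hnu : 0 < nu) by apply Rpower_pos.
  assert (Hto0 := Finv_to0 F Finv HFinv Fdecr).
  assert (H2 := lim0_comp (fun u => f (nu * u) / f u) Finv (Rpower nu beta) (HRV nu Hnu) Hto0).
  assert (H1 : lim_infty (fun t => f (Finv (lam * t)) / f (nu * Finv t)) 1).
  { intros eps' He'.
    set (eps := Rmin (eps' / 2) 1).
    assert (He : 0 < eps) by (unfold eps; apply Rmin_pos; lra).
    assert (He1 : eps <= 1) by apply Rmin_r. assert (He2 : eps <= eps' / 2) by apply Rmin_l.
    destruct (UL f beta ltac:(lra) Hfp HRV HAM eps He He1) as [th [d [Hth [Hd HU]]]].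
    destruct (HFiRV (nu * th) ltac:(apply Rmult_lt_0_compat; lra)) as [T1 HT1].
    destruct (Hto0 (d / nu) ltac:(apply Rdiv_lt_0_compat; lra)) as [T2 HT2].
    exists (Rmax (Rmax T1 T2) 0). intros t Ht.
    assert (Rmax T1 T2 <= Rmax (Rmax T1 T2) 0) by apply Rmax_l. assert (0 <= Rmax (Rmax T1 T2) 0) by apply Rmax_r.
    assert (T1 <= Rmax T1 T2) by apply Rmax_l. assert (T2 <= Rmax T1 T2) by apply Rmax_r.
    specialize (HT1 t ltac:(lra)). specialize (HT2 t ltac:(lra)).
    destruct (HFinv (lam * t) ltac:(nra)) as [Hv _].
    set (u := Finv t) in *. set (v := Finv (lam * t)) in *.
    apply Rabs_def2 in HT1.
    assert (Hnd : 0 < nu * u < d).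
    { split; [nra|]. destruct HT2 as [_ HT2]. apply (Rmult_lt_compat_l nu) in HT2; auto.
      replace (nu * (d / nu)) with d in HT2 by (field; lra). lra. }
    assert (Eq : v / u * u = v) by (field; lra).
    assert (Hvl : (1 - th) * (nu * u) <= v).
    { assert (nu - nu * th < v / u) by lra.
      apply (Rmult_lt_compat_r u) in H4; [|lra]. rewrite Eq in H4. lra. }
    assert (Hvu : v <= (1 + th) * (nu * u)).
    { assert (v / u < nu + nu * th) by lra.
      apply (Rmult_lt_compat_r u) in H4; [|lra]. rewrite Eq in H4. lra. }
    destruct (HU v (nu * u) Hnd (conj Hvl Hvu)) as [Hl Hr].
    assert (Hfn : 0 < f (nu * u)) by (apply Hfp; lra).
    assert (Eq2 : f v / f (nu * u) * f (nu * u) = f v) by (field; lra).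
    apply Rabs_def1.
    + assert (f v / f (nu * u) <= 1 + eps).
      { apply (Rmult_le_reg_r (f (nu * u))); auto. rewrite Eq2. lra. }
      lra.
    + assert (1 - eps <= f v / f (nu * u)).
      { apply (Rmult_le_reg_r (f (nu * u))); auto. rewrite Eq2. lra. }
      lra. }
  assert (Hm := lim_mult _ _ _ _ H1 H2).
  replace (Rpower lam (- (beta / (beta - 1)))) with (1 * Rpower nu beta).
  2:{ unfold nu. rewrite Rpower_mult. rewrite Rmult_1_l. f_equal. field. lra. }
  apply (lim_ext_ev _ (fun t => f (Finv (lam * t)) / f (Finv t)) _ 0 ) in Hm; auto.
  intros t Ht. destruct (HFinv t ltac:(lra)) as [Hu _].
  assert (0 < f (nu * Finv t)) by (apply Hfp; nra). assert (0 < f (Finv t)) by (apply Hfp; lra).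
  field. lra.
Qed.

Lemma Rpower_inv_id x a : Rpower x (- a) * Rpower x a = 1.
Proof. rewrite <- Rpower_plus. replace (- a + a) with 0 by ring. unfold Rpower. rewrite Rmult_0_l. apply exp_0. Qed.

Lemma Lam_unique (L rho Lam Lam' : R) : 0 < rho -> 0 < Lam < 1 -> 0 < Lam' < 1 ->
  (1 - Lam) * Rpower Lam (- rho) = L -> (1 - Lam') * Rpower Lam' (- rho) = L -> Lam' = Lam.
Proof.
  intros Hr H1 H2 E1 E2.
  assert (Hk : forall a b, 0 < a -> a < b -> b < 1 ->
     (1 - b) * Rpower b (- rho) < (1 - a) * Rpower a (- rho)).
  { intros a b Ha Hab Hb1. rewrite !Rpower_Ropp.
    assert (Rpower a rho < Rpower b rho) by (apply Rlt_Rpower_l; lra).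
    assert (0 < Rpower a rho) by apply Rpower_pos.
    assert (/ Rpower b rho < / Rpower a rho) by (apply Rinv_lt_contravar; [apply Rmult_lt_0_compat|]; lra).
    assert (0 < / Rpower b rho) by (apply Rinv_0_lt_compat, Rpower_pos).
    apply Rmult_gt_0_lt_compat; lra. }
  destruct (Rtotal_order Lam' Lam) as [Hl|[He|Hg]]; auto.
  - specialize (Hk Lam' Lam ltac:(lra) Hl ltac:(lra)). lra.
  - specialize (Hk Lam Lam' ltac:(lra) Hg ltac:(lra)). lra.
Qed.

Theorem theorem2
  (f g : R -> R) (xi : R) (F Finv : R -> R) (x : R -> R)
  (phi : R -> R) (delta L : R)
  (Hfc : continuity f) (Hflip : locally_lipschitz f)
  (Hf0 : f 0 = 0) (Hfsign : forall u, u <> 0 -> u * f u > 0)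
  (Hgc : continuous_on_nonneg g) (Hgpos : forall t, 0 < t -> g t > 0)
  (Hxi : 0 < xi)
  (HF : forall u, 0 < u -> exists pr : Riemann_integrable (fun v => / f v) u 1,
          F u = RiemannInt pr)
  (HF0 : lim_0plus_infty F)
  (HFinv : forall t, 0 <= t -> 0 < Finv t /\ F (Finv t) = t)
  (Hx0 : x 0 = xi) (Hxc : continuous_on_nonneg x)
  (Hxd : forall t, 0 < t -> derivable_pt_lim x t (- f (x t) + g t))
  (Hdelta : 0 < delta)
  (Hphi : forall a b, 0 < a -> a < b -> b < delta -> phi a <= phi b)
  (Hfphi : lim_0plus (fun u => f u / phi u) 1)
  (HL : 0 < L)
  (HgL : lim_infty (fun t => g t / f (Finv t)) L) :
  lim_infty x 0 /\
  (forall beta, 1 < beta -> RV0 f beta ->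
     exists Lam, (0 < Lam < 1 /\ (1 - Lam) * Rpower Lam (- (beta / (beta - 1))) = L) /\
       (forall Lam', 0 < Lam' < 1 -> (1 - Lam') * Rpower Lam' (- (beta / (beta - 1))) = L ->
          Lam' = Lam) /\
       lim_infty (fun t => F (x t) / t) Lam) /\
  (RVinf (fun t => f (Finv t)) (-1) -> RVinf Finv 0 ->
     lim_infty (fun t => F (x t) / t) (1 / (L + 1))).
Proof.
  assert (Hfp := fpos_of f Hfsign).
  assert (HFd := F_deriv f F Hfc Hfp HF).
  assert (Fdecr := F_decr f F Hfp HFd).
  assert (HF1 := F_one f F HF).
  assert (HFid := Finv_deriv f F Finv Hfc Hfp HFd HFinv).
  assert (Hxp := x_pos f g x xi Hf0 Hfsign Hgpos Hxi Hx0 Hxc Hxd).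
  assert (Hh : forall t, 0 <= t -> 0 < f (Finv t)) by (intros t Ht; apply Hfp, HFinv, Ht).
  assert (Hgb := g_bound f g Finv L Hh HgL).
  assert (Hxb := x_bounded f g x Finv L HL Hfp Hxd Hxp (fun t Ht => proj1 (HFinv t Ht)) HFid Hgb).
  assert (Hg0 := g_to_0 f g F Finv L HL Hfc Hf0 HFinv Fdecr Hgb).
  assert (Hxlim := x_to_0 f g x Hfc Hfp Hxd Hxp Hxb Hg0).
  assert (Hgp : forall t, 0 < t -> 0 < g t) by (intros t Ht; apply Hgpos, Ht).
  destruct (Hxlim 1 ltac:(lra)) as [T1 HT1].
  set (T0 := Rmax T1 0).
  assert (HT0 : 0 <= T0) by apply Rmax_r.
  assert (HT0' : forall t, T0 < t -> 0 < x t < 1 /\ 0 < t).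
  { intros t Ht. assert (T1 <= T0) by apply Rmax_l. specialize (HT1 t ltac:(lra)).
    rewrite Rminus_0_r in HT1. apply Rabs_def2 in HT1. specialize (Hxp t ltac:(lra)). lra. }
  assert (Hyp : forall t, T0 < t -> 0 <= F (x t)).
  { intros t Ht. destruct (HT0' t Ht) as [[Ha Hb] _]. left. rewrite <- HF1. apply Fdecr; lra. }
  assert (Hyd : forall t, T0 < t ->
     derivable_pt_lim (fun s => F (x s)) t (1 - g t / f (Finv (F (x t))))).
  { intros t Ht. destruct (HT0' t Ht) as [[Ha Hb] Hc].
    rewrite (Finv_F F Finv HFinv Fdecr (x t) Ha (Hyp t Ht)).
    assert (Hcomp := derivable_pt_lim_comp x F t _ _ (Hxd t Hc) (HFd (x t) Ha)).
    assert (Hf := Hfp (x t) Ha).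
    replace (1 - g t / f (x t)) with (- / f (x t) * (- f (x t) + g t)) by (field; lra).
    exact Hcomp. }
  assert (Hyinf : forall K, exists T, forall t, T < t -> K < F (x t)).
  { intros K. set (K' := Rmax K 0 + 1).
    assert (HK' : 0 <= K') by (unfold K'; assert (0 <= Rmax K 0) by apply Rmax_r; lra).
    destruct (HFinv K' HK') as [He HFe].
    destruct (Hxlim (Finv K') He) as [T HT]. exists (Rmax T 0). intros t Ht.
    assert (T <= Rmax T 0) by apply Rmax_l. assert (0 <= Rmax T 0) by apply Rmax_r.
    specialize (HT t ltac:(lra)). rewrite Rminus_0_r in HT. apply Rabs_def2 in HT.
    specialize (Hxp t). destruct (Rle_lt_dec 0 t) as [Ht0|Ht0].
    - specialize (Hxp Ht0). assert (F (Finv K') < F (x t)) by (apply Fdecr; lra).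
      assert (K <= Rmax K 0) by apply Rmax_l. unfold K' in *. lra.
    - lra. }
  assert (HAN := h_AN f F Finv phi delta Hfp HFinv Fdecr Hdelta Hphi Hfphi).
  split; [exact Hxlim|]. split.
  - intros beta Hb HRV.
    set (rho := beta / (beta - 1)).
    assert (Hrho : 0 < rho) by (unfold rho; apply Rdiv_lt_0_compat; lra).
    destruct (Lam_exists L beta HL Hb) as [Lam [HLam HLamE]].
    exists Lam. split; [split; auto|]. split.
    { intros Lam' H1 H2. apply (Lam_unique L rho Lam Lam'); auto. }
    assert (HLp : L * Rpower Lam rho = 1 - Lam).
    { rewrite <- HLamE. fold rho. rewrite Rmult_assoc, Rpower_inv_id. ring. }
    assert (HRVh := h_RV f F Finv phi delta beta Hfc Hfp HFd HF1 HFinv Hdelta Hphi Hfphi Hb HRV).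
    apply (core g (fun t => f (Finv t)) (fun t => F (x t)) L T0 Lam HL ltac:(lra) Hh Hgp HAN HgL HT0 Hyd Hyp Hyinf).
    + intros L1 HL1. exists (Rpower L1 rho). split.
      * replace rho with (- - rho) by ring. apply (RV_ratio (fun t => f (Finv t)) L1 (- rho)); [lra|auto|]. apply HRVh. lra.
      * assert (Rpower Lam rho < Rpower L1 rho) by (apply Rlt_Rpower_l; lra).
        assert (L * Rpower Lam rho < L * Rpower L1 rho) by (apply Rmult_lt_compat_l; lra). lra.
    + intros L0 HL0 HL0'. exists (Rpower L0 rho). split.
      * replace rho with (- - rho) by ring. apply (RV_ratio (fun t => f (Finv t)) L0 (- rho)); [lra|auto|]. apply HRVh. lra.
      * assert (Rpower L0 rho < Rpower Lam rho) by (apply Rlt_Rpower_l; lra).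
        assert (L * Rpower L0 rho < L * Rpower Lam rho) by (apply Rmult_lt_compat_l; lra). lra.
  - intros HRVh _.
    apply (core g (fun t => f (Finv t)) (fun t => F (x t)) L T0 (1 / (L + 1)) HL
      ltac:(apply Rdiv_lt_0_compat; lra) Hh Hgp HAN HgL HT0 Hyd Hyp Hyinf).
    + intros L1 HL1. exists L1. split.
      * assert (HL1p : 0 < L1) by (assert (0 < 1/(L+1)) by (apply Rdiv_lt_0_compat; lra); lra).
        assert (E : Rpower L1 (- - 1) = L1) by (replace (- - 1) with 1 by ring; apply Rpower_1; lra).
        assert (Hq := RV_ratio (fun t => f (Finv t)) L1 (- 1) HL1p Hh (HRVh L1 HL1p)). rewrite E in Hq. exact Hq.
      * apply (Rmult_lt_compat_r (L + 1)) in HL1; [|lra]. unfold Rdiv in HL1.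
        rewrite Rmult_1_l, Rinv_l in HL1; lra.
    + intros L0 HL0 HL0'. exists L0. split.
      * assert (E : Rpower L0 (- - 1) = L0) by (replace (- - 1) with 1 by ring; apply Rpower_1; lra).
        assert (Hq := RV_ratio (fun t => f (Finv t)) L0 (- 1) HL0 Hh (HRVh L0 HL0)). rewrite E in Hq. exact Hq.
      * apply (Rmult_lt_compat_r (L + 1)) in HL0'; [|lra]. unfold Rdiv in HL0'.
        rewrite Rmult_1_l, Rinv_l in HL0'; lra.
Qed.
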